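(* Assume $1<\gamma<2$ and $\alpha,\beta\ge0$ with $\beta+\alpha\gamma>2$. Fix $(t_0,x_0)$ with $t_0\ge 0$ and $|x_0|\ge t_0+2$, and write $r_0=|x_0|$. For $0\le\tilde r\le t_0$ and $\tilde\omega\in\mathbb{S}^2$ put $x=x_0+\tilde r\tilde\omega$, $r=|x|$, $\omega=x/r$, $\tau=\omega\cdot\tilde\omega$. Then \[ \int_{\mathbb{S}^2}\big((1+\tau)r^{\gamma}+(r_0-t_0)^{\gamma}\big)^{-\alpha}r^{-\beta}\,d\tilde\omega\le C(r_0-\tilde r)^{2-\beta-\gamma+\epsilon}r_0^{-2}\Big((r_0-\tilde r)^{(1-\alpha)\gamma}+(r_0-t_0)^{(1-\alpha)\gamma}\Big) \] where $\epsilon=0$ if $\alpha\ne1$, while if $\alpha=1$ the estimate holds for any $\epsilon>0$; the constant $C$ depends only on $\epsilon,\gamma,\alpha,\beta$. *)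

(* Defs.v *)
From Stdlib Require Import Reals Lra.
From Coquelicot Require Import Coquelicot.
Open Scope R_scope.

Definition vec3 : Type := (R * R * R)%type.
Definition dot3 (u v : vec3) : R :=
  let '(u1, u2, u3) := u in let '(v1, v2, v3) := v in u1*v1 + u2*v2 + u3*v3.
Definition norm3 (u : vec3) : R := sqrt (dot3 u u).
Definition add3 (u v : vec3) : vec3 :=
  let '(u1, u2, u3) := u in let '(v1, v2, v3) := v in (u1+v1, u2+v2, u3+v3).
Definition scal3 (a : R) (u : vec3) : vec3 :=
  let '(u1, u2, u3) := u in (a*u1, a*u2, a*u3).

Definition sph (th ph : R) : vec3 := (sin th * cos ph, sin th * sin ph, cos th).

(* Integral over S^2 with respect to the standard surface measure,
   written in spherical coordinates: the surface element is sin(th) dth dph. *)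
Definition sphere_integral (f : vec3 -> R) : R :=
  RInt (fun ph => RInt (fun th => f (sph th ph) * sin th) 0 PI) 0 (2 * PI).

Definition integrand (alpha beta gamma t0 rt : R) (x0 : vec3) (wt : vec3) : R :=
  let x := add3 x0 (scal3 rt wt) in
  let r := norm3 x in
  let w := scal3 (/ r) x in
  let tau := dot3 w wt in
  let r0 := norm3 x0 in
  Rpower ((1 + tau) * Rpower r gamma + Rpower (r0 - t0) gamma) (- alpha)
  * Rpower r (- beta).

(* Main.v *)
Require Import Defs.
From Stdlib Require Import Reals Lra Classical.
From Coquelicot Require Import Coquelicot.
Open Scope R_scope.

Lemma ball_R (x e y : R) : ball x e y <-> Rabs (y - x) < e.
Proof. reflexivity. Qed.

Lemma sin_lip x y : Rabs (sin x - sin y) <= Rabs (x - y).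
Proof.
  destruct (MVT_gen sin y x cos) as [c [_ Hc]].
  - intros z _. auto_derive; auto. ring.
  - intros z _. apply continuity_sin.
  - rewrite Hc, Rabs_mult. rewrite <- (Rmult_1_l (Rabs (x - y))) at 2.
    apply Rmult_le_compat_r; [apply Rabs_pos|]. apply Rabs_le; pose proof (COS_bound c); lra.
Qed.

Lemma cos_lip x y : Rabs (cos x - cos y) <= Rabs (x - y).
Proof.
  destruct (MVT_gen cos y x (fun z => - sin z)) as [c [_ Hc]].
  - intros z _. auto_derive; auto. ring.
  - intros z _. apply continuity_cos.
  - rewrite Hc, Rabs_mult. rewrite <- (Rmult_1_l (Rabs (x - y))) at 2.
    apply Rmult_le_compat_r; [apply Rabs_pos|]. apply Rabs_le; pose proof (SIN_bound c); lra.
Qed.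

Lemma RInt_diff_le (f g : R -> R) a b e :
  a <= b -> ex_RInt f a b -> ex_RInt g a b ->
  (forall t, a <= t <= b -> Rabs (f t - g t) <= e) ->
  Rabs (RInt f a b - RInt g a b) <= (b - a) * e.
Proof.
  intros Hab Hf Hg H.
  assert (E : RInt f a b - RInt g a b = RInt (fun t => f t - g t) a b).
  { symmetry. apply (RInt_minus f g a b Hf Hg). }
  rewrite E. apply abs_RInt_le_const; auto.
  apply (ex_RInt_minus f g a b Hf Hg).
Qed.

Lemma LemC2 (K : R -> R -> R -> R) a b x0 y0 :
  a <= b -> (forall x y, ex_RInt (K x y) a b) ->
  (forall e, 0 < e -> exists d, 0 < d /\ forall x y t, Rabs (x - x0) < d -> Rabs (y - y0) < d ->
     a <= t <= b -> Rabs (K x y t - K x0 y0 t) <= e) ->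
  continuity_2d_pt (fun x y => RInt (K x y) a b) x0 y0.
Proof.
  intros Hab Hex HU; unfold continuity_2d_pt; intros eps.
  destruct (HU (eps / (2 * (b - a + 1)))) as [d [Hd H]].
  { apply Rdiv_lt_0_compat. destruct eps; simpl; lra. lra. }
  exists (mkposreal d Hd). intros u v Hu Hv. simpl in *.
  eapply Rle_lt_trans. apply (RInt_diff_le _ _ a b (eps / (2 * (b - a + 1)))); auto.
  try (intros t Ht; apply H; auto).
  destruct eps as [ep Hep]; simpl.
  apply Rle_lt_trans with ((b - a + 1) * (ep / (2 * (b - a + 1)))).
  apply Rmult_le_compat_r. left; apply Rdiv_lt_0_compat; lra. lra.
  field_simplify; lra.
Qed.

Lemma LemC1 (K : R -> R -> R) a b y0 :
  a <= b -> (forall y, ex_RInt (K y) a b) ->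
  (forall e, 0 < e -> exists d, 0 < d /\ forall y t, Rabs (y - y0) < d ->
     a <= t <= b -> Rabs (K y t - K y0 t) <= e) ->
  continuous (fun y => RInt (K y) a b) y0.
Proof.
  intros Hab Hex HU.
  apply filterlim_locally. intros eps.
  destruct (HU (eps / (2 * (b - a + 1)))) as [d [Hd H]].
  { apply Rdiv_lt_0_compat. destruct eps; simpl; lra. lra. }
  exists (mkposreal d Hd). intros v Hv. apply ball_R in Hv. apply ball_R. simpl in *.
  eapply Rle_lt_trans. apply (RInt_diff_le _ _ a b (eps / (2 * (b - a + 1)))); auto.
  try (intros t Ht; apply H; auto).
  destruct eps as [ep Hep]; simpl.
  apply Rle_lt_trans with ((b - a + 1) * (ep / (2 * (b - a + 1)))).
  apply Rmult_le_compat_r. left; apply Rdiv_lt_0_compat; lra. lra.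
  field_simplify; lra.
Qed.

Lemma Heine (h : R -> R) a b :
  (forall x, a <= x <= b -> continuous h x) ->
  forall e, 0 < e -> exists d, 0 < d /\ forall x y, a <= x <= b -> a <= y <= b ->
    Rabs (x - y) < d -> Rabs (h x - h y) < e.
Proof.
  intros Hc e He.
  destruct (unifcont_1d h a b Hc (mkposreal e He)) as [d Hd].
  exists d. split. apply cond_pos. intros x y Hx Hy Hxy.
  assert (B : ball x d y). { apply ball_R. rewrite Rabs_minus_sym. auto. }
  specialize (Hd x y Hx Hy B).
  apply NNPP in Hd. apply ball_R in Hd. simpl in Hd. rewrite Rabs_minus_sym; auto.
Qed.

Lemma Bnd (h : R -> R) a b : a <= b ->
  (forall x, a <= x <= b -> continuous h x) ->
  exists M, forall x, a <= x <= b -> Rabs (h x) <= M.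
Proof.
  intros Hab Hc.
  destruct (continuity_ab_maj (fun x => Rabs (h x)) a b Hab) as [m [Hm _]].
  - intros c Hc'. apply continuity_pt_filterlim.
    apply (continuous_comp h Rabs). apply Hc; auto.
    apply continuity_pt_filterlim. apply Rcontinuity_abs.
  - exists (Rabs (h m)). auto.
Qed.

Definition SS (a t p : R) := sin a * sin t * cos p + cos a * cos t.
Definition dS (a t p : R) := cos a * sin t * cos p - sin a * cos t.

Lemma S_bound a t p : -1 <= SS a t p <= 1.
Proof.
  unfold SS.
  pose proof (sin2_cos2 a); pose proof (sin2_cos2 t); pose proof (sin2_cos2 p).
  unfold Rsqr in *.
  assert (Hsq : (sin a * sin t * cos p + cos a * cos t)^2 <= 1).
  { pose proof (COS_bound p).
    assert (Hc : cos p * cos p <= 1) by nra.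
    set (X := sin t * cos p).
    assert (HX : X * X <= sin t * sin t) by (unfold X; pose proof (Rle_0_sqr (sin t)); unfold Rsqr in *; nra).
    pose proof (Rle_0_sqr (sin a * cos t - cos a * X)). unfold Rsqr in *.
    replace (sin a * sin t * cos p) with (sin a * X) by (unfold X; ring).
    nra. }
  split; nra.
Qed.

Lemma prod_lip x y x0 y0 : Rabs y <= 1 -> Rabs x0 <= 1 ->
  Rabs (x * y - x0 * y0) <= Rabs (x - x0) + Rabs (y - y0).
Proof.
  intros Hy Hx0.
  replace (x * y - x0 * y0) with ((x - x0) * y + x0 * (y - y0)) by ring.
  eapply Rle_trans. apply Rabs_triang. rewrite !Rabs_mult.
  apply Rplus_le_compat.
  - rewrite <- (Rmult_1_r (Rabs (x - x0))) at 2. apply Rmult_le_compat_l; auto. apply Rabs_pos.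
  - rewrite <- (Rmult_1_l (Rabs (y - y0))) at 2. apply Rmult_le_compat_r; auto. apply Rabs_pos.
Qed.

Lemma abs_sin_le1 x : Rabs (sin x) <= 1.
Proof. apply Rabs_le. apply SIN_bound. Qed.
Lemma abs_cos_le1 x : Rabs (cos x) <= 1.
Proof. apply Rabs_le. apply COS_bound. Qed.

Lemma S_lip a t p a0 p0 : Rabs (SS a t p - SS a0 t p0) <= 2 * Rabs (a - a0) + Rabs (p - p0).
Proof.
  unfold SS.
  replace (sin a * sin t * cos p + cos a * cos t - (sin a0 * sin t * cos p0 + cos a0 * cos t))
    with (sin t * (sin a * cos p - sin a0 * cos p0) + cos t * (cos a - cos a0)) by ring.
  eapply Rle_trans. apply Rabs_triang. rewrite !Rabs_mult.
  pose proof (prod_lip (sin a) (cos p) (sin a0) (cos p0) (abs_cos_le1 _) (abs_sin_le1 _)).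
  pose proof (sin_lip a a0). pose proof (cos_lip p p0). pose proof (cos_lip a a0).
  pose proof (abs_sin_le1 t). pose proof (abs_cos_le1 t).
  pose proof (Rabs_pos (sin a * cos p - sin a0 * cos p0)). pose proof (Rabs_pos (cos a - cos a0)).
  pose proof (Rabs_pos (sin t)). pose proof (Rabs_pos (cos t)).
  assert (Rabs (sin t) * Rabs (sin a * cos p - sin a0 * cos p0) <= Rabs (sin a * cos p - sin a0 * cos p0)) by nra.
  assert (Rabs (cos t) * Rabs (cos a - cos a0) <= Rabs (cos a - cos a0)) by nra.
  lra.
Qed.

Lemma dS_lip a t p a0 p0 : Rabs (dS a t p - dS a0 t p0) <= 2 * Rabs (a - a0) + Rabs (p - p0).
Proof.
  unfold dS.
  replace (cos a * sin t * cos p - sin a * cos t - (cos a0 * sin t * cos p0 - sin a0 * cos t))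
    with (sin t * (cos a * cos p - cos a0 * cos p0) - cos t * (sin a - sin a0)) by ring.
  unfold Rminus at 1. eapply Rle_trans. apply Rabs_triang. rewrite Rabs_Ropp, !Rabs_mult.
  pose proof (prod_lip (cos a) (cos p) (cos a0) (cos p0) (abs_cos_le1 _) (abs_cos_le1 _)).
  pose proof (sin_lip a a0). pose proof (cos_lip p p0). pose proof (cos_lip a a0).
  pose proof (abs_sin_le1 t). pose proof (abs_cos_le1 t).
  pose proof (Rabs_pos (cos a * cos p - cos a0 * cos p0)). pose proof (Rabs_pos (sin a - sin a0)).
  pose proof (Rabs_pos (sin t)). pose proof (Rabs_pos (cos t)).
  assert (Rabs (sin t) * Rabs (cos a * cos p - cos a0 * cos p0) <= Rabs (cos a * cos p - cos a0 * cos p0)) by nra.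
  assert (Rabs (cos t) * Rabs (sin a - sin a0) <= Rabs (sin a - sin a0)) by nra.
  lra.
Qed.

Lemma dS_bound a t p : Rabs (dS a t p) <= 2.
Proof.
  unfold dS. unfold Rminus. eapply Rle_trans. apply Rabs_triang.
  rewrite Rabs_Ropp, !Rabs_mult.
  pose proof (abs_sin_le1 t); pose proof (abs_cos_le1 t); pose proof (abs_sin_le1 a);
  pose proof (abs_cos_le1 a); pose proof (abs_cos_le1 p).
  pose proof (Rabs_pos (sin t)); pose proof (Rabs_pos (cos t)); pose proof (Rabs_pos (sin a));
  pose proof (Rabs_pos (cos a)); pose proof (Rabs_pos (cos p)).
  assert (Rabs (cos a) * Rabs (sin t) <= 1) by nra.
  assert (Rabs (cos a) * Rabs (sin t) * Rabs (cos p) <= 1).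
  { pose proof (Rmult_le_pos _ _ H4 H5). nra. }
  assert (Rabs (sin a) * Rabs (cos t) <= 1) by nra.
  lra.
Qed.

Lemma UC_S (h : R -> R) : (forall x, continuous h x) ->
  forall e, 0 < e -> exists d, 0 < d /\ forall a t p a0 p0,
    Rabs (a - a0) < d -> Rabs (p - p0) < d -> Rabs (h (SS a t p) - h (SS a0 t p0)) < e.
Proof.
  intros Hc e He.
  destruct (Heine h (-1) 1 (fun x _ => Hc x) e He) as [d [Hd H]].
  exists (d / 3). split. lra. intros a t p a0 p0 Ha Hp.
  apply H; try apply S_bound.
  pose proof (S_lip a t p a0 p0). lra.
Qed.

Lemma exd_cont (f : R -> R) x : ex_derive f x -> continuous f x.
Proof. intros H. apply (ex_derive_continuous (K:=R_AbsRing) (V:=R_NormedModule)). exact H. Qed.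

Lemma cont_S_t a p t : continuous (fun t => SS a t p) t.
Proof. apply exd_cont. unfold SS. auto_derive. auto. Qed.

Lemma cont_S_p a t p : continuous (fun p => SS a t p) p.
Proof. apply exd_cont. unfold SS. auto_derive. auto. Qed.

Lemma cont_sin x : continuous sin x.
Proof. apply continuity_pt_filterlim. apply continuity_sin. Qed.
Lemma cont_cos x : continuous cos x.
Proof. apply continuity_pt_filterlim. apply continuity_cos. Qed.

Lemma c2d_cont2 f x y : continuity_2d_pt f x y -> continuous (f x) y.
Proof.
  intros H. apply filterlim_locally. intros eps.
  destruct (H eps) as [d Hd]. exists d. intros v Hv. apply ball_R in Hv. apply ball_R.
  apply Hd; auto. rewrite Rminus_eq_0, Rabs_R0. apply cond_pos.
Qed.

Lemma c2d_sin1 x y : continuity_2d_pt (fun u v => sin u) x y.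
Proof. apply (continuity_1d_2d_pt_comp sin (fun u v => u)). apply continuity_sin. apply continuity_2d_pt_id1. Qed.
Lemma c2d_cos1 x y : continuity_2d_pt (fun u v => cos u) x y.
Proof. apply (continuity_1d_2d_pt_comp cos (fun u v => u)). apply continuity_cos. apply continuity_2d_pt_id1. Qed.
Lemma c2d_sin2 x y : continuity_2d_pt (fun u v => sin v) x y.
Proof. apply (continuity_1d_2d_pt_comp sin (fun u v => v)). apply continuity_sin. apply continuity_2d_pt_id2. Qed.
Lemma c2d_cos2 x y : continuity_2d_pt (fun u v => cos v) x y.
Proof. apply (continuity_1d_2d_pt_comp cos (fun u v => v)). apply continuity_cos. apply continuity_2d_pt_id2. Qed.

Lemma c2d_S_at p x y : continuity_2d_pt (fun u v => SS u v p) x y.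
Proof.
  unfold SS.
  apply continuity_2d_pt_plus; repeat apply continuity_2d_pt_mult;
  auto using c2d_sin1, c2d_cos1, c2d_sin2, c2d_cos2, continuity_2d_pt_const.
Qed.

Lemma c2d_S_pt a x y : continuity_2d_pt (fun u v => SS a v u) x y.
Proof.
  unfold SS.
  apply continuity_2d_pt_plus; repeat apply continuity_2d_pt_mult;
  auto using c2d_sin1, c2d_cos1, c2d_sin2, c2d_cos2, continuity_2d_pt_const.
Qed.

Lemma c2d_comp (h : R -> R) (f : R -> R -> R) x y :
  (forall z, continuous h z) -> continuity_2d_pt f x y -> continuity_2d_pt (fun u v => h (f u v)) x y.
Proof.
  intros Hh Hf. apply continuity_1d_2d_pt_comp; auto. apply continuity_pt_filterlim. apply Hh.
Qed.

Lemma cmul (f g : R -> R) x : continuous f x -> continuous g x -> continuous (fun y => f y * g y) x.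
Proof. intros; apply (continuous_mult (U:=R_UniformSpace) (K:=R_AbsRing)); auto. Qed.
Lemma cplus (f g : R -> R) x : continuous f x -> continuous g x -> continuous (fun y => f y + g y) x.
Proof. intros; apply (continuous_plus (U:=R_UniformSpace) (V:=R_NormedModule)); auto. Qed.
Lemma ccomp (f g : R -> R) x : continuous f x -> continuous g (f x) -> continuous (fun y => g (f y)) x.
Proof. intros; apply (continuous_comp f g); auto. Qed.

Lemma exRc (f : R -> R) a b : (forall z, Rmin a b <= z <= Rmax a b -> continuous f z) -> ex_RInt f a b.
Proof. intros H. apply (ex_RInt_continuous (V:=R_CompleteNormedModule)). exact H. Qed.

Ltac rq := lazymatch goal with |- ?x = ?y => change (@eq R x y) end; ring.

Lemma dmul (f h : R -> R) x df dh : is_derive f x df -> is_derive h x dh ->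
  is_derive (fun y => f y * h y) x (df * h x + f x * dh).
Proof. intros H1 H2. apply (is_derive_mult f h x df dh H1 H2). intros; apply Rmult_comm. Qed.
Lemma dcomp (f h : R -> R) x df dh : is_derive f x df -> is_derive h (f x) dh ->
  is_derive (fun y => h (f y)) x (dh * df).
Proof. intros H1 H2. pose proof (is_derive_comp h f x dh df H2 H1). rewrite Rmult_comm. exact H. Qed.
Lemma dval (f : R -> R) x d1 d2 : is_derive f x d1 -> d1 = d2 -> is_derive f x d2.
Proof. intros H ->; exact H. Qed.

Definition F (g : R -> R) a p t := g (SS a t p) * sin t.
Definition Phi g a p := RInt (F g a p) 0 PI.
Definition dF (g' : R -> R) a p t := g' (SS a t p) * dS a t p * sin t.
Definition Psi g' a p := RInt (dF g' a p) 0 PI.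

Lemma F_cont (g : R -> R) a p t : (forall x, continuous g x) -> continuous (F g a p) t.
Proof.
  intros Hg. unfold F. apply cmul. apply ccomp. apply cont_S_t. apply Hg. apply cont_sin.
Qed.

Lemma F_ex (g : R -> R) a p b c : (forall x, continuous g x) -> ex_RInt (F g a p) b c.
Proof. intros Hg. apply exRc. intros; apply F_cont; auto. Qed.

Lemma dF_cont (g' : R -> R) a p t : (forall x, continuous g' x) -> continuous (dF g' a p) t.
Proof.
  intros Hg. unfold dF. apply cmul. apply cmul. apply ccomp. apply cont_S_t. apply Hg.
  apply exd_cont; unfold dS; auto_derive; auto. apply cont_sin.
Qed.

Lemma dF_ex (g' : R -> R) a p b c : (forall x, continuous g' x) -> ex_RInt (dF g' a p) b c.
Proof. intros Hg. apply exRc. intros; apply dF_cont; auto. Qed.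

Lemma F_derive (g g' : R -> R) a p t : (forall x, is_derive g x (g' x)) ->
  is_derive (fun u => F g u p t) a (dF g' a p t).
Proof.
  intros Hg. unfold F, dF.
  assert (HS : is_derive (fun u => SS u t p) a (dS a t p)).
  { unfold SS, dS. auto_derive; try ring; auto. }
  pose proof (is_derive_comp g (fun u => SS u t p) a _ _ (Hg (SS a t p)) HS) as H.
  pose proof (is_derive_scal _ _ (sin t) _ H) as H2.
  replace (g' (SS a t p) * dS a t p * sin t) with (sin t * scal (dS a t p) (g' (SS a t p))).
  2: { change (scal (dS a t p) (g' (SS a t p))) with (dS a t p * g' (SS a t p)). ring. }
  eapply is_derive_ext. 2: exact H2. intros u. simpl. ring.
Qed.

Lemma Phi_cont (g : R -> R) a p : (forall x, continuous g x) -> continuous (Phi g a) p.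
Proof.
  intros Hg. unfold Phi.
  apply (LemC1 (fun y t => F g a y t)). pose proof PI_RGT_0; lra.
  intros; apply F_ex; auto.
  intros e He. destruct (UC_S g Hg e He) as [d [Hd H]].
  exists d. split; auto. intros y t Hy Ht. unfold F.
  rewrite <- Rmult_minus_distr_r, Rabs_mult.
  pose proof (abs_sin_le1 t). pose proof (Rabs_pos (sin t)).
  specialize (H a t y a p). rewrite Rminus_eq_0, Rabs_R0 in H.
  assert (Hx := H Hd Hy). pose proof (Rabs_pos (g (SS a t y) - g (SS a t p))). nra.
Qed.

Lemma Phi_ex (g : R -> R) a b c : (forall x, continuous g x) -> ex_RInt (Phi g a) b c.
Proof. intros Hg. apply exRc. intros; apply Phi_cont; auto. Qed.

Lemma Phi_derive (g g' : R -> R) a p : (forall x, is_derive g x (g' x)) -> (forall x, continuous g' x) ->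
  is_derive (fun u => Phi g u p) a (Psi g' a p).
Proof.
  intros Hg Hg'.
  assert (Hgc : forall x, continuous g x).
  { intros x. apply exd_cont. eexists. apply Hg. }
  unfold Phi, Psi.
  assert (E : RInt (dF g' a p) 0 PI = RInt (fun t => Derive (fun u => F g u p t) a) 0 PI).
  { apply RInt_ext. intros x _. symmetry. apply is_derive_unique. apply F_derive; auto. }
  rewrite E.
  apply (is_derive_RInt_param (fun u t => F g u p t)).
  - exists (mkposreal 1 Rlt_0_1). intros y _ t _. eexists. apply F_derive; auto.
  - intros t _. eapply continuity_2d_pt_ext.
    { intros u v. symmetry. apply is_derive_unique. apply F_derive; auto. }
    unfold dF. apply continuity_2d_pt_mult. apply continuity_2d_pt_mult.
    apply c2d_comp; auto. apply c2d_S_at.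
    unfold dS. apply continuity_2d_pt_plus. repeat apply continuity_2d_pt_mult;
      auto using c2d_sin1, c2d_cos1, c2d_sin2, c2d_cos2, continuity_2d_pt_const.
    apply continuity_2d_pt_opp. repeat apply continuity_2d_pt_mult;
      auto using c2d_sin1, c2d_cos1, c2d_sin2, c2d_cos2, continuity_2d_pt_const.
    apply c2d_sin2.
  - exists (mkposreal 1 Rlt_0_1). intros y _. apply F_ex; auto.
Qed.

Lemma Psi_c2d (g' : R -> R) a p : (forall x, continuous g' x) -> continuity_2d_pt (Psi g') a p.
Proof.
  intros Hg'. unfold Psi.
  destruct (Bnd g' (-1) 1) as [M HM]. lra. intros; auto.
  apply (LemC2 (fun x y t => dF g' x y t)). pose proof PI_RGT_0; lra.
  intros; apply dF_ex; auto.
  intros e He.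
  destruct (UC_S g' Hg' (e/4)) as [d1 [Hd1 H1]]. lra.
  assert (HM0 : 0 <= M). { eapply Rle_trans. apply Rabs_pos. apply (HM 0). lra. }
  exists (Rmin d1 (e / (6 * (M + 1)))). split.
  { apply Rmin_pos; auto. apply Rdiv_lt_0_compat; lra. }
  intros x y t Hx Hy Ht. unfold dF.
  assert (Hx1 : Rabs (x - a) < d1) by (eapply Rlt_le_trans; [exact Hx| apply Rmin_l]).
  assert (Hy1 : Rabs (y - p) < d1) by (eapply Rlt_le_trans; [exact Hy| apply Rmin_l]).
  assert (Hx2 : Rabs (x - a) < e / (6 * (M + 1))) by (eapply Rlt_le_trans; [exact Hx| apply Rmin_r]).
  assert (Hy2 : Rabs (y - p) < e / (6 * (M + 1))) by (eapply Rlt_le_trans; [exact Hy| apply Rmin_r]).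
  specialize (H1 x t y a p Hx1 Hy1).
  pose proof (dS_lip x t y a p) as HL.
  pose proof (dS_bound x t y) as HB.
  pose proof (HM (SS a t p) (S_bound a t p)) as HMS.
  replace (g' (SS x t y) * dS x t y * sin t - g' (SS a t p) * dS a t p * sin t)
    with (((g' (SS x t y) - g' (SS a t p)) * dS x t y + g' (SS a t p) * (dS x t y - dS a t p)) * sin t) by ring.
  rewrite Rabs_mult.
  pose proof (abs_sin_le1 t). pose proof (Rabs_pos (sin t)).
  set (Q := (g' (SS x t y) - g' (SS a t p)) * dS x t y + g' (SS a t p) * (dS x t y - dS a t p)).
  assert (HQ : Rabs Q <= e).
  { unfold Q. eapply Rle_trans. apply Rabs_triang. rewrite !Rabs_mult.
    pose proof (Rabs_pos (g' (SS x t y) - g' (SS a t p))). pose proof (Rabs_pos (dS x t y)).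
    pose proof (Rabs_pos (dS x t y - dS a t p)). pose proof (Rabs_pos (g' (SS a t p))).
    assert (T1 : Rabs (g' (SS x t y) - g' (SS a t p)) * Rabs (dS x t y) <= e / 2) by nra.
    assert (T2 : Rabs (dS x t y - dS a t p) <= 3 * (e / (6 * (M + 1)))) by lra.
    assert (T3 : Rabs (g' (SS a t p)) * Rabs (dS x t y - dS a t p) <= M * (3 * (e / (6 * (M + 1))))).
    { apply Rmult_le_compat; auto. }
    assert (T4 : M * (3 * (e / (6 * (M + 1)))) <= e / 2).
    { apply Rle_trans with ((M + 1) * (3 * (e / (6 * (M + 1))))).
      apply Rmult_le_compat_r. apply Rmult_le_pos. lra. left; apply Rdiv_lt_0_compat; lra. lra.
      right. field. lra. }
    lra. }
  pose proof (Rabs_pos Q). nra.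
Qed.

Definition II (g : R -> R) a := RInt (Phi g a) 0 (2 * PI).

Lemma I_derive (g g' : R -> R) a : (forall x, is_derive g x (g' x)) -> (forall x, continuous g' x) ->
  is_derive (II g) a (RInt (Psi g' a) 0 (2 * PI)).
Proof.
  intros Hg Hg'.
  assert (Hgc : forall x, continuous g x).
  { intros x. apply exd_cont. eexists. apply Hg. }
  unfold II.
  assert (E : RInt (Psi g' a) 0 (2*PI) = RInt (fun p => Derive (fun u => Phi g u p) a) 0 (2*PI)).
  { apply RInt_ext. intros x _. symmetry. apply is_derive_unique. apply Phi_derive; auto. }
  rewrite E.
  apply (is_derive_RInt_param (fun u p => Phi g u p)).
  - exists (mkposreal 1 Rlt_0_1). intros y _ t _. eexists. apply Phi_derive; auto.
  - intros t _. eapply continuity_2d_pt_ext.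
    { intros u v. symmetry. apply is_derive_unique. apply Phi_derive; auto. }
    apply Psi_c2d; auto.
  - exists (mkposreal 1 Rlt_0_1). intros y _. apply Phi_ex; auto.
Qed.

Definition Af (g : R -> R) a p t := sin t * cos p * g (SS a t p).
Definition dA (g g' : R -> R) a p t :=
  cos t * cos p * g (SS a t p) + sin t * cos p * (g' (SS a t p) * (sin a * cos t * cos p - cos a * sin t)).
Definition Bf (g : R -> R) a p t := cos t * sin p * g (SS a t p).
Definition dB (g g' : R -> R) a p t :=
  cos t * cos p * g (SS a t p) + cos t * sin p * (g' (SS a t p) * (- (sin a * sin t * sin p))).

Lemma dF_split g g' a p t : dF g' a p t = dB g g' a p t - dA g g' a p t.
Proof. unfold dF, dB, dA, dS. assert (H : sin p ^ 2 = 1 - cos p ^ 2) by (pose proof (sin2_cos2 p); unfold Rsqr in *; nra). ring_simplify. rewrite H. ring. Qed.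

Lemma A_derive (g g' : R -> R) a p t : (forall x, is_derive g x (g' x)) ->
  is_derive (fun t => Af g a p t) t (dA g g' a p t).
Proof.
  intros Hg. unfold Af, dA.
  assert (HS : is_derive (fun t => SS a t p) t (sin a * cos t * cos p - cos a * sin t)).
  { unfold SS. auto_derive; try ring; auto. }
  pose proof (dcomp _ g t _ _ HS (Hg (SS a t p))) as H.
  assert (H0 : is_derive (fun t => sin t * cos p) t (cos t * cos p)) by (auto_derive; try ring; auto).
  eapply dval. apply (dmul _ _ t _ _ H0 H). rq.
Qed.

Lemma B_derive (g g' : R -> R) a p t : (forall x, is_derive g x (g' x)) ->
  is_derive (fun p => Bf g a p t) p (dB g g' a p t).
Proof.
  intros Hg. unfold Bf, dB.
  assert (HS : is_derive (fun p => SS a t p) p (- (sin a * sin t * sin p))).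
  { unfold SS. auto_derive; try ring; auto. }
  pose proof (dcomp _ g p _ _ HS (Hg (SS a t p))) as H.
  assert (H0 : is_derive (fun p => cos t * sin p) p (cos t * cos p)) by (auto_derive; try ring; auto).
  eapply dval. apply (dmul _ _ p _ _ H0 H). rq.
Qed.

Lemma copp (f : R -> R) x : continuous f x -> continuous (fun y => - f y) x.
Proof. intros; apply (continuous_opp (U:=R_UniformSpace) (V:=R_NormedModule)); auto. Qed.
Lemma cconst (c x : R) : continuous (fun _ : R => c) x.
Proof. apply continuous_const. Qed.
Lemma cid (x : R) : continuous (fun y : R => y) x.
Proof. apply continuous_id. Qed.
Lemma cont_gS_t (g : R -> R) a p t : (forall x, continuous g x) -> continuous (fun t => g (SS a t p)) t.
Proof. intros; apply ccomp; auto. apply cont_S_t. Qed.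
Lemma cont_gS_p (g : R -> R) a p t : (forall x, continuous g x) -> continuous (fun p => g (SS a t p)) p.
Proof. intros; apply ccomp; auto. apply cont_S_p. Qed.
Lemma c2d_gS_pt (g : R -> R) a x y : (forall z, continuous g z) -> continuity_2d_pt (fun u v => g (SS a v u)) x y.
Proof. intros; apply c2d_comp; auto. apply c2d_S_pt. Qed.

Ltac cont_tac := repeat match goal with
  | |- continuous (fun _ => ?c) _ => apply cconst
  | |- continuous (fun y => y) _ => apply cid
  | |- continuous (fun y => sin y) _ => apply cont_sin
  | |- continuous sin _ => apply cont_sin
  | |- continuous cos _ => apply cont_cos
  | |- continuous (fun y => cos y) _ => apply cont_cos
  | |- continuous (fun y => ?g (SS ?a y ?p)) _ => apply (cont_gS_t g); solve [auto]
  | |- continuous (fun y => ?g (SS ?a ?t y)) _ => apply (cont_gS_p g); solve [auto]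
  | |- continuous (fun y => ?f + ?h) _ => apply cplus
  | |- continuous (fun y => ?f - ?h) _ => apply cplus
  | |- continuous (fun y => ?f * ?h) _ => apply cmul
  | |- continuous (fun y => - ?f) _ => apply copp
  end.
Ltac c2d_tac := repeat match goal with
  | |- continuity_2d_pt (fun _ _ => ?c) _ _ => apply continuity_2d_pt_const
  | |- continuity_2d_pt (fun u v => sin u) _ _ => apply c2d_sin1
  | |- continuity_2d_pt (fun u v => sin v) _ _ => apply c2d_sin2
  | |- continuity_2d_pt (fun u v => cos u) _ _ => apply c2d_cos1
  | |- continuity_2d_pt (fun u v => cos v) _ _ => apply c2d_cos2
  | |- continuity_2d_pt (fun u v => ?g (SS ?a v u)) _ _ => apply (c2d_gS_pt g); solve [auto]
  | |- continuity_2d_pt (fun u v => ?f + ?h) _ _ => apply continuity_2d_pt_plus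
  | |- continuity_2d_pt (fun u v => ?f - ?h) _ _ => apply continuity_2d_pt_plus
  | |- continuity_2d_pt (fun u v => ?f * ?h) _ _ => apply continuity_2d_pt_mult
  | |- continuity_2d_pt (fun u v => - ?f) _ _ => apply continuity_2d_pt_opp
  end.

Lemma Psi_eq (g g' : R -> R) a p : (forall x, is_derive g x (g' x)) -> (forall x, continuous g' x) ->
  Psi g' a p = RInt (dB g g' a p) 0 PI.
Proof.
  intros Hg Hg'.
  assert (Hgc : forall x, continuous g x).
  { intros x. apply exd_cont. eexists. apply Hg. }
  unfold Psi. rewrite (RInt_ext _ (fun t => dB g g' a p t - dA g g' a p t)).
  2: { intros; apply dF_split. }
  assert (ExB : ex_RInt (dB g g' a p) 0 PI).
  { apply exRc. intros z _. unfold dB. cont_tac. }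
  assert (ExA : ex_RInt (dA g g' a p) 0 PI).
  { apply exRc. intros z _. unfold dA. cont_tac. }
  pose proof (RInt_minus _ _ _ _ ExB ExA) as E. simpl in E. unfold minus, plus, opp in E; simpl in E.
  change (RInt (fun x : R => dB g g' a p x - dA g g' a p x) 0 PI = RInt (dB g g' a p) 0 PI).
  unfold Rminus. rewrite E.
  assert (HA : RInt (dA g g' a p) 0 PI = 0).
  { assert (HI : is_RInt (dA g g' a p) 0 PI (minus (Af g a p PI) (Af g a p 0))).
    { apply (is_RInt_derive (V:=R_CompleteNormedModule)).
      - intros; apply A_derive; auto.
      - intros; unfold dA; cont_tac. }
    apply (is_RInt_unique (V:=R_CompleteNormedModule)) in HI. rewrite HI.
    unfold Af. rewrite sin_PI, sin_0. unfold minus, plus, opp; simpl. ring. }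
  rewrite HA. change (RInt (dB g g' a p) 0 PI + - 0 = RInt (dB g g' a p) 0 PI). ring.
Qed.

Definition Bint (g : R -> R) a p := RInt (Bf g a p) 0 PI.

Lemma Bint_derive (g g' : R -> R) a p : (forall x, is_derive g x (g' x)) -> (forall x, continuous g' x) ->
  is_derive (Bint g a) p (Psi g' a p).
Proof.
  intros Hg Hg'.
  assert (Hgc : forall x, continuous g x).
  { intros x. apply exd_cont. eexists. apply Hg. }
  rewrite (Psi_eq g g'); auto.
  assert (E : RInt (dB g g' a p) 0 PI = RInt (fun t => Derive (fun u => Bf g a u t) p) 0 PI).
  { apply RInt_ext. intros x _. symmetry. apply is_derive_unique. apply B_derive; auto. }
  rewrite E. unfold Bint.
  apply (is_derive_RInt_param (fun u t => Bf g a u t)).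
  - exists (mkposreal 1 Rlt_0_1). intros y _ t _. eexists. apply B_derive; auto.
  - intros t _. eapply continuity_2d_pt_ext.
    { intros u v. symmetry. apply is_derive_unique. apply B_derive; auto. }
    unfold dB. c2d_tac.
  - exists (mkposreal 1 Rlt_0_1). intros y _. apply exRc. intros; unfold Bf; cont_tac.
Qed.

Lemma Psi_int_zero (g g' : R -> R) a : (forall x, is_derive g x (g' x)) -> (forall x, continuous g' x) ->
  RInt (Psi g' a) 0 (2 * PI) = 0.
Proof.
  intros Hg Hg'.
  assert (Hgc : forall x, continuous g x).
  { intros x. apply exd_cont. eexists. apply Hg. }
  assert (HI : is_RInt (Psi g' a) 0 (2 * PI) (minus (Bint g a (2 * PI)) (Bint g a 0))).
  { apply (is_RInt_derive (V:=R_CompleteNormedModule)).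
    - intros; apply Bint_derive; auto.
    - intros; apply c2d_cont2. apply Psi_c2d; auto. }
  apply (is_RInt_unique (V:=R_CompleteNormedModule)) in HI. rewrite HI.
  assert (Z : forall q, sin q = 0 -> Bint g a q = 0).
  { intros q Hq. unfold Bint. rewrite (RInt_ext _ (fun _ => 0)).
    rewrite RInt_const. exact (Rmult_0_r _).
    intros x _. unfold Bf. rewrite Hq. rq. }
  rewrite !Z. unfold minus, plus, opp; simpl. change (0 + - 0 = 0). ring.
  apply sin_0. apply sin_2PI.
Qed.

Lemma I_const (g g' : R -> R) a : (forall x, is_derive g x (g' x)) -> (forall x, continuous g' x) ->
  II g a = II g 0.
Proof.
  intros Hg Hg'.
  destruct (MVT_gen (II g) 0 a (fun _ => 0)) as [c [_ Hc]].
  - intros x _. eapply dval. apply (I_derive g g'); auto. apply (Psi_int_zero g g'); auto.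
  - intros x _. apply continuity_pt_filterlim. apply exd_cont. eexists. apply (I_derive g g'); auto.
  - lra.
Qed.

Lemma I_zero (g : R -> R) : (forall x, continuous g x) -> II g 0 = 2 * PI * RInt g (-1) 1.
Proof.
  intros Hg.
  set (c := RInt (fun t => g (cos t) * sin t) 0 PI).
  unfold II. rewrite (RInt_ext _ (fun _ => c)).
  2: { intros x _. unfold Phi, c. apply RInt_ext. intros t _. unfold F, SS.
       rewrite sin_0, cos_0. f_equal. f_equal. ring. }
  rewrite RInt_const. change (scal (2 * PI - 0) c) with ((2 * PI - 0) * c).
  assert (Hc : c = RInt g (-1) 1).
  { assert (H1 : RInt (fun y => scal (- sin y) (g (cos y))) 0 PI = RInt g (cos 0) (cos PI)).
    { apply (RInt_comp (V:=R_CompleteNormedModule)).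
      - intros; apply Hg.
      - intros x _. split. auto_derive; auto; ring. apply copp. apply cont_sin. }
    rewrite cos_0, cos_PI in H1.
    assert (H2 : RInt g 1 (-1) = - RInt g (-1) 1).
    { rewrite <- (opp_RInt_swap (V:=R_CompleteNormedModule)). reflexivity.
      apply exRc. intros; apply Hg. }
    rewrite H2 in H1.
    rewrite (RInt_ext _ (fun y => opp (g (cos y) * sin y))) in H1.
    2: { intros; change (scal (- sin x) (g (cos x))) with (- sin x * g (cos x)).
         unfold opp; simpl. rq. }
    rewrite (RInt_opp (V:=R_CompleteNormedModule)) in H1.
    2: { apply exRc. intros. apply cmul. apply ccomp. apply cont_cos. apply Hg. apply cont_sin. }
    unfold opp in H1; simpl in H1. unfold c. change (- RInt (fun x : R => g (cos x) * sin x) 0 PI = - RInt g (-1) 1) in H1.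
    lra. }
  rewrite Hc. change ((2 * PI - 0) * RInt g (-1) 1 = 2 * PI * RInt g (-1) 1). ring.
Qed.

Lemma FH_C1 (g g' : R -> R) a : (forall x, is_derive g x (g' x)) -> (forall x, continuous g' x) ->
  II g a = 2 * PI * RInt g (-1) 1.
Proof.
  intros Hg Hg'. rewrite (I_const g g'); auto. apply I_zero.
  intros x. apply exd_cont. eexists. apply Hg.
Qed.

Lemma zero_of_small (L K : R) : 0 < K -> (forall e, 0 < e -> Rabs L <= K * e) -> L = 0.
Proof.
  intros HK H. destruct (Req_dec L 0) as [|Hn]; auto.
  assert (Hp : 0 < Rabs L) by (apply Rabs_pos_lt; auto).
  specialize (H (Rabs L / (2 * K))). 
  assert (K * (Rabs L / (2 * K)) = Rabs L / 2) by (field; lra).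
  assert (0 < Rabs L / (2 * K)) by (apply Rdiv_lt_0_compat; lra).
  lra.
Qed.

Lemma G_derive (g : R -> R) s : (forall x, continuous g x) -> is_derive (fun s => RInt g 0 s) s (g s).
Proof.
  intros Hg. apply (is_derive_RInt g (fun s => RInt g 0 s) 0 s).
  - exists (mkposreal 1 Rlt_0_1). intros b _. apply (RInt_correct (V:=R_CompleteNormedModule)).
    apply exRc. intros; apply Hg.
  - apply Hg.
Qed.

Definition gh (g : R -> R) h s := (RInt g 0 (s + h) - RInt g 0 s) / h.
Definition gh' (g : R -> R) h s := (g (s + h) - g s) / h.

Lemma gh_derive (g : R -> R) h s : (forall x, continuous g x) -> is_derive (gh g h) s (gh' g h s).
Proof.
  intros Hg. unfold gh, gh'.
  assert (H1 : is_derive (fun s => RInt g 0 (s + h)) s (g (s + h) * 1)).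
  { apply (dcomp (fun s => s + h) (fun s => RInt g 0 s)). auto_derive; auto. apply G_derive; auto. }
  pose proof (G_derive g s Hg) as H2.
  assert (H3 : is_derive (fun s => RInt g 0 (s + h) - RInt g 0 s) s (g (s + h) * 1 - g s)).
  { apply (is_derive_minus (K:=R_AbsRing) (V:=R_NormedModule)); auto. }
  assert (H4 : is_derive (fun s => / h * (RInt g 0 (s + h) - RInt g 0 s)) s (/ h * (g (s + h) * 1 - g s))).
  { apply is_derive_scal; auto. }
  apply (dval _ _ (/ h * (g (s + h) * 1 - g s))).
  eapply is_derive_ext. 2: exact H4.
  intros t; simpl. unfold Rdiv. rq. unfold Rdiv. rq.
Qed.

Lemma gh_cont (g : R -> R) h s : (forall x, continuous g x) -> continuous (gh g h) s.
Proof. intros Hg. apply exd_cont. eexists. apply gh_derive; auto. Qed.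

Lemma gh'_cont (g : R -> R) h s : (forall x, continuous g x) -> continuous (gh' g h) s.
Proof.
  intros Hg. unfold gh'. apply cmul. apply cplus. apply (ccomp (fun s => s + h)).
  apply cplus. apply cid. apply cconst. apply Hg. apply copp. apply Hg. apply cconst.
Qed.

Lemma gh_approx (g : R -> R) : (forall x, continuous g x) ->
  forall e, 0 < e -> exists h, 0 < h /\ forall s, -1 <= s <= 1 -> Rabs (gh g h s - g s) <= e.
Proof.
  intros Hg e He.
  destruct (Heine g (-1) 2 (fun x _ => Hg x) e He) as [d [Hd H]].
  set (h := Rmin (d / 2) 1).
  assert (Hh : 0 < h) by (apply Rmin_pos; lra).
  assert (Hh1 : h <= 1) by apply Rmin_r.
  assert (Hh2 : h <= d / 2) by apply Rmin_l.
  exists h. split; auto. intros s Hs.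
  assert (Ex : forall u v, ex_RInt g u v) by (intros; apply exRc; intros; apply Hg).
  assert (E : RInt g 0 (s + h) - RInt g 0 s = RInt g s (s + h)).
  { rewrite <- (RInt_Chasles (V:=R_CompleteNormedModule) g 0 s (s + h)); auto.
    change (RInt g 0 s + RInt g s (s + h) - RInt g 0 s = RInt g s (s + h)). ring. }
  unfold gh. rewrite E.
  assert (B : Rabs (RInt g s (s + h) - RInt (fun _ => g s) s (s + h)) <= (s + h - s) * e).
  { apply RInt_diff_le; auto. lra. apply exRc. intros; apply cconst.
    intros t Ht. left. apply H; try lra. rewrite Rabs_right; lra. }
  rewrite RInt_const in B. change (scal (s + h - s) (g s)) with ((s + h - s) * g s) in B.
  replace (RInt g s (s + h) / h - g s) with ((RInt g s (s + h) - (s + h - s) * g s) / h) by (field; lra).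
  unfold Rdiv. rewrite Rabs_mult, Rabs_inv, (Rabs_right h) by lra.
  replace (s + h - s) with h in B by ring.
  apply Rmult_le_reg_r with h; auto. rewrite Rmult_assoc, Rinv_l by lra. replace (s + h - s) with h by ring. lra.
Qed.

Lemma FH_cont (g : R -> R) a : (forall x, continuous g x) -> II g a = 2 * PI * RInt g (-1) 1.
Proof.
  intros Hg.
  assert (HPI := PI_RGT_0).
  apply Rminus_diag_uniq. apply (zero_of_small _ (2 * PI * PI + 4 * PI)). nra.
  intros e He.
  destruct (gh_approx g Hg e He) as [h [Hh Hap]].
  assert (Hc : forall x, continuous (gh g h) x) by (intros; apply gh_cont; auto).
  pose proof (FH_C1 (gh g h) (gh' g h) a (fun x => gh_derive g h x Hg) (fun x => gh'_cont g h x Hg)) as E.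
  assert (B1 : Rabs (II g a - II (gh g h) a) <= (2 * PI - 0) * ((PI - 0) * e)).
  { unfold II. apply RInt_diff_le. lra. apply Phi_ex; auto. apply Phi_ex; auto.
    intros p Hp. unfold Phi. apply RInt_diff_le. lra. apply F_ex; auto. apply F_ex; auto.
    intros t Ht. unfold F. rewrite <- Rmult_minus_distr_r, Rabs_mult.
    pose proof (abs_sin_le1 t). pose proof (Rabs_pos (sin t)).
    assert (Rabs (g (SS a t p) - gh g h (SS a t p)) <= e).
    { rewrite Rabs_minus_sym. apply Hap. apply S_bound. }
    pose proof (Rabs_pos (g (SS a t p) - gh g h (SS a t p))). nra. }
  assert (B2 : Rabs (RInt (gh g h) (-1) 1 - RInt g (-1) 1) <= (1 - -1) * e).
  { apply RInt_diff_le. lra. apply exRc; auto. apply exRc; intros; auto. auto. }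
  replace (II g a - 2 * PI * RInt g (-1) 1) with ((II g a - II (gh g h) a) + 2 * PI * (RInt (gh g h) (-1) 1 - RInt g (-1) 1)) by (rewrite E; ring).
  eapply Rle_trans. apply Rabs_triang. rewrite Rabs_mult, (Rabs_right (2 * PI)) by lra.
  nra.
Qed.

Lemma shift_int (H : R -> R) psi : (forall x, continuous H x) -> (forall x, H (x + 2 * PI) = H x) ->
  RInt (fun p => H (p - psi)) 0 (2 * PI) = RInt H 0 (2 * PI).
Proof.
  intros Hc Hp.
  assert (Ex : forall u v, ex_RInt H u v) by (intros; apply exRc; intros; apply Hc).
  assert (E1 : RInt (fun p => H (p - psi)) 0 (2 * PI) = RInt H (- psi) (2 * PI - psi)).
  { pose proof (RInt_comp_lin (V:=R_CompleteNormedModule) H 1 (- psi) 0 (2 * PI)) as E.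
    replace (1 * 0 + - psi) with (- psi) in E by ring.
    replace (1 * (2 * PI) + - psi) with (2 * PI - psi) in E by ring.
    rewrite <- E by apply Ex. apply RInt_ext. intros x _.
    change (H (x - psi) = 1 * H (1 * x + - psi)). rewrite !Rmult_1_l. reflexivity. }
  assert (E2 : RInt H (2 * PI) (2 * PI - psi) = RInt H 0 (- psi)).
  { pose proof (RInt_comp_lin (V:=R_CompleteNormedModule) H 1 (2 * PI) 0 (- psi)) as E.
    replace (1 * 0 + 2 * PI) with (2 * PI) in E by ring.
    replace (1 * - psi + 2 * PI) with (2 * PI - psi) in E by ring.
    rewrite <- E by apply Ex. apply RInt_ext. intros x _.
    change (1 * H (1 * x + 2 * PI) = H x). rewrite !Rmult_1_l, Hp. reflexivity. }
  rewrite E1.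
  rewrite <- (RInt_Chasles (V:=R_CompleteNormedModule) H (- psi) (2 * PI) (2 * PI - psi)) by apply Ex.
  rewrite <- (RInt_Chasles (V:=R_CompleteNormedModule) H (- psi) 0 (2 * PI)) by apply Ex.
  rewrite E2.
  rewrite <- (opp_RInt_swap (V:=R_CompleteNormedModule) H 0 (- psi)) by apply Ex.
  change (- RInt H 0 (- psi) + RInt H 0 (2 * PI) + RInt H 0 (- psi) = RInt H 0 (2 * PI)). ring.
Qed.

Lemma Phi_period (g : R -> R) a p : Phi g a (p + 2 * PI) = Phi g a p.
Proof.
  unfold Phi. apply RInt_ext. intros x _. unfold F, SS.
  rewrite cos_plus, cos_2PI, sin_2PI. f_equal. f_equal. ring.
Qed.

Lemma polar (c d : R) : c * c + d * d = 1 -> exists psi, c = cos psi /\ d = sin psi.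
Proof.
  intros H.
  assert (Hc : -1 <= c <= 1) by nra.
  assert (Hs : sin (acos c) = Rabs d).
  { rewrite sin_acos by auto. replace (1 - c²) with (Rsqr d) by (unfold Rsqr; lra).
    apply sqrt_Rsqr_abs. }
  destruct (Rle_dec 0 d) as [Hd | Hd].
  - exists (acos c). rewrite cos_acos by auto. rewrite Hs, Rabs_right by lra. auto.
  - exists (- acos c). rewrite cos_neg, sin_neg, cos_acos by auto. rewrite Hs, Rabs_left by lra.
    split; auto; ring.
Qed.

Lemma FH_gen (g : R -> R) (u : vec3) : (forall x, continuous g x) -> dot3 u u = 1 ->
  RInt (fun ph => RInt (fun th => g (dot3 u (sph th ph)) * sin th) 0 PI) 0 (2 * PI)
  = 2 * PI * RInt g (-1) 1.
Proof.
  intros Hg Hu. destruct u as [[u1 u2] u3]. simpl in Hu.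
  assert (H3 : -1 <= u3 <= 1) by nra.
  set (al := acos u3).
  assert (Hca : cos al = u3) by (apply cos_acos; auto).
  assert (Hsa : sin al * sin al = u1 * u1 + u2 * u2).
  { unfold al. rewrite sin_acos by auto. rewrite sqrt_sqrt. unfold Rsqr; lra. unfold Rsqr; nra. }
  assert (Hsa0 : 0 <= sin al) by (apply sin_ge_0; apply acos_bound).
  assert (Hpsi : exists psi, u1 = sin al * cos psi /\ u2 = sin al * sin psi).
  { destruct (Req_dec (sin al) 0) as [Z | NZ].
    - exists 0. rewrite Z in *. split; nra.
    - destruct (polar (u1 / sin al) (u2 / sin al)) as [psi [E1 E2]].
      { replace (u1 / sin al * (u1 / sin al) + u2 / sin al * (u2 / sin al)) with ((u1 * u1 + u2 * u2) / (sin al * sin al)) by (field; auto). rewrite <- Hsa. field. auto. }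
      exists psi. rewrite <- E1, <- E2. split; field; auto. }
  destruct Hpsi as [psi [E1 E2]].
  transitivity (RInt (fun ph => Phi g al (ph - psi)) 0 (2 * PI)).
  { apply RInt_ext. intros x _. unfold Phi. apply RInt_ext. intros t _. unfold F, SS, sph, dot3.
    rewrite cos_minus, Hca, E1, E2. f_equal. f_equal. ring. }
  rewrite shift_int.
  - apply FH_cont; auto.
  - intros; apply Phi_cont; auto.
  - intros; apply Phi_period.
Qed.

Lemma exp_mono x y : x <= y -> exp x <= exp y.
Proof. intros [H|H]. left; apply exp_increasing; auto. subst; lra. Qed.

Lemma pw_pos x e : 0 < Rpower x e.
Proof. apply exp_pos. Qed.

Lemma pw_anti x y e : 0 < x -> x <= y -> e <= 0 -> Rpower y e <= Rpower x e.
Proof.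
  intros Hx Hxy He. unfold Rpower. apply exp_mono.
  pose proof (ln_le x y Hx Hxy). nra.
Qed.

Lemma pw_mono x y e : 0 < x -> x <= y -> 0 <= e -> Rpower x e <= Rpower y e.
Proof.
  intros Hx Hxy He. unfold Rpower. apply exp_mono.
  pose proof (ln_le x y Hx Hxy). nra.
Qed.

Lemma pw_expo x e1 e2 : 1 <= x -> e1 <= e2 -> Rpower x e1 <= Rpower x e2.
Proof. intros; apply Rle_Rpower; auto. Qed.

Lemma pw_sqrt x e : 0 < x -> Rpower (sqrt x) e = Rpower x (e / 2).
Proof.
  intros Hx. rewrite <- Rpower_sqrt by auto. rewrite Rpower_mult. f_equal. field.
Qed.

Lemma pw_sq x e : 0 < x -> Rpower x e = x * x * Rpower x (e - 2).
Proof.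
  intros Hx. replace e with (2 + (e - 2)) at 1 by ring. rewrite Rpower_plus.
  replace 2 with (INR 2) by (simpl; ring). rewrite Rpower_pow by auto. simpl. ring.
Qed.

Definition LL r0 rt s := r0 * r0 + rt * rt + 2 * r0 * rt * s.
Definition RR r0 rt s := sqrt (LL r0 rt s).
Definition gfun (al be ga t0 rt r0 s : R) :=
  Rpower ((1 + (r0 * s + rt) / RR r0 rt s) * Rpower (RR r0 rt s) ga + Rpower (r0 - t0) ga) (- al)
  * Rpower (RR r0 rt s) (- be).

Lemma LL_eq r0 rt s : LL r0 rt s = (r0 - rt) * (r0 - rt) + 2 * r0 * rt * (1 + s).
Proof. unfold LL. ring. Qed.

Lemma RR_ge r0 rt s : 0 <= rt -> rt < r0 -> -1 <= s -> r0 - rt <= RR r0 rt s.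
Proof.
  intros H1 H2 H3. unfold RR. rewrite <- (sqrt_square (r0 - rt)) by lra.
  apply sqrt_le_1_alt. rewrite LL_eq. assert (0 <= r0 * rt) by nra. nra.
Qed.

Lemma key1 r0 rt s : 0 <= rt -> rt < r0 -> -1 <= s <= 1 ->
  r0 * r0 * (1 + s) / (2 * (RR r0 rt s * RR r0 rt s)) <= 1 + (r0 * s + rt) / RR r0 rt s.
Proof.
  intros H1 H2 H3.
  set (a := r0 - rt). set (R := RR r0 rt s). set (p := 1 + s).
  assert (HRa : a <= R) by (apply RR_ge; lra).
  assert (Hrr : 0 <= r0 * rt) by nra.
  assert (Ha : 0 < a) by (unfold a; lra).
  assert (HRR : R * R = a * a + 2 * r0 * rt * p).
  { unfold R, RR. rewrite sqrt_sqrt. rewrite LL_eq. unfold a, p. ring. rewrite LL_eq. unfold p. nra. }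
  assert (Hp : 0 <= p) by (unfold p; lra).
  assert (Hr0 : r0 = a + rt) by (unfold a; ring).
  replace (1 + (r0 * s + rt) / R) with ((R - a + r0 * p) / R) by (unfold p, a; field; lra).
  apply Rmult_le_reg_r with (2 * (R * R)). nra.
  replace (r0 * r0 * p / (2 * (R * R)) * (2 * (R * R))) with (r0 * r0 * p) by (field; nra).
  replace ((R - a + r0 * p) / R * (2 * (R * R))) with (2 * R * (R - a + r0 * p)) by (field; nra).
  apply Rmult_le_reg_r with (R + a). lra.
  assert (E : 2 * R * (R - a + r0 * p) * (R + a) = 2 * R * (2 * r0 * rt * p + r0 * p * (R + a))).
  { replace (2 * R * (R - a + r0 * p) * (R + a)) with (2 * R * ((R * R - a * a) + r0 * p * (R + a))) by ring.
    rewrite HRR. ring. }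
  rewrite E.
  assert (F0 : 0 <= 4 * R * rt + (2 * R - r0) * (R + a)).
  { rewrite Hr0. nra. }
  assert (F1 : 0 <= r0 * p) by nra.
  nra.
Qed.

Lemma RR_pos r0 rt s : 0 <= rt -> rt < r0 -> -1 <= s -> 0 < RR r0 rt s.
Proof. intros. pose proof (RR_ge r0 rt s). lra. Qed.

Lemma RR_sq r0 rt s : 0 <= rt -> rt < r0 -> -1 <= s -> RR r0 rt s * RR r0 rt s = LL r0 rt s.
Proof.
  intros. unfold RR. apply sqrt_sqrt. rewrite LL_eq. assert (0 <= r0 * rt) by nra. nra.
Qed.

Lemma Q_lower ga E r0 rt s : 0 <= rt -> rt < r0 -> -1 <= s <= 1 ->
  r0 * r0 * (1 + s) / 2 * Rpower (RR r0 rt s) (ga - 2) + E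
  <= (1 + (r0 * s + rt) / RR r0 rt s) * Rpower (RR r0 rt s) ga + E.
Proof.
  intros H1 H2 H3. apply Rplus_le_compat_r.
  pose proof (RR_pos r0 rt s H1 H2 (proj1 H3)) as HR.
  rewrite (pw_sq (RR r0 rt s) ga HR).
  pose proof (key1 r0 rt s H1 H2 H3) as K.
  pose proof (pw_pos (RR r0 rt s) (ga - 2)) as HP.
  set (R := RR r0 rt s) in *. set (P := Rpower R (ga - 2)) in *.
  replace ((1 + (r0 * s + rt) / R) * (R * R * P)) with (((1 + (r0 * s + rt) / R) * (R * R)) * P) by ring.
  apply Rmult_le_compat_r. lra.
  apply Rmult_le_reg_r with (/ (R * R)). apply Rinv_0_lt_compat; nra.
  replace ((1 + (r0 * s + rt) / R) * (R * R) * / (R * R)) with (1 + (r0 * s + rt) / R) by (field; lra).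
  replace (r0 * r0 * (1 + s) / 2 * / (R * R)) with (r0 * r0 * (1 + s) / (2 * (R * R))) by (field; lra).
  exact K.
Qed.

Lemma Q_pos ga E r0 rt s : 0 <= rt -> rt < r0 -> -1 <= s <= 1 -> 0 < E ->
  0 < (1 + (r0 * s + rt) / RR r0 rt s) * Rpower (RR r0 rt s) ga + E.
Proof.
  intros. eapply Rlt_le_trans. 2: apply Q_lower; auto.
  assert (0 <= r0 * r0 * (1 + s) / 2 * Rpower (RR r0 rt s) (ga - 2)).
  { apply Rmult_le_pos. assert (0 <= r0 * r0) by nra. apply Rmult_le_pos. nra. lra.
    left; apply pw_pos. }
  lra.
Qed.

Lemma reg1 al be ga t0 rt r0 s : 1 < ga < 2 -> 0 <= al -> 0 <= be -> 0 <= rt <= t0 -> t0 + 2 <= r0 ->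
  -1 <= s -> 1 + s <= (r0 - rt) * (r0 - rt) / (2 * (r0 * r0)) ->
  gfun al be ga t0 rt r0 s <=
  Rpower (r0 * r0 * Rpower (2 * (r0 - rt)) (ga - 2) / 2 * (1 + s) + Rpower (r0 - t0) ga) (- al)
  * Rpower (r0 - rt) (- be).
Proof.
  intros Hg Hal Hbe Hrt Hr0 Hs Hp.
  assert (Hr0p : 0 < r0) by lra.
  assert (Hp1 : (r0 - rt) * (r0 - rt) / (2 * (r0 * r0)) <= 1 / 2).
  { apply Rmult_le_reg_r with (2 * (r0 * r0)). nra.
    replace ((r0 - rt) * (r0 - rt) / (2 * (r0 * r0)) * (2 * (r0 * r0))) with ((r0 - rt) * (r0 - rt)) by (field; lra).
    nra. }
  assert (Hs1 : -1 <= s <= 1) by lra.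
  assert (HE : 0 < Rpower (r0 - t0) ga) by apply pw_pos.
  pose proof (RR_pos r0 rt s ltac:(lra) ltac:(lra) Hs) as HR.
  pose proof (RR_ge r0 rt s ltac:(lra) ltac:(lra) Hs) as HRa.
  assert (HR2 : RR r0 rt s <= 2 * (r0 - rt)).
  { unfold RR. rewrite <- (sqrt_square (2 * (r0 - rt))) by lra. apply sqrt_le_1_alt.
    rewrite LL_eq.
    assert (2 * r0 * rt * (1 + s) <= 2 * r0 * r0 * ((r0 - rt) * (r0 - rt) / (2 * (r0 * r0)))).
    { apply Rmult_le_compat; nra. }
    replace (2 * r0 * r0 * ((r0 - rt) * (r0 - rt) / (2 * (r0 * r0)))) with ((r0 - rt) * (r0 - rt)) in H by (field; lra).
    nra. }
  unfold gfun.
  apply Rmult_le_compat.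
  - left; apply pw_pos.
  - left; apply pw_pos.
  - apply pw_anti; try lra.
    + assert (0 <= r0 * r0 * Rpower (2 * (r0 - rt)) (ga - 2) / 2 * (1 + s)).
      { apply Rmult_le_pos. apply Rmult_le_pos. apply Rmult_le_pos. nra. left; apply pw_pos. lra. lra. }
      lra.
    + eapply Rle_trans. 2: apply Q_lower; lra.
      apply Rplus_le_compat_r.
      replace (r0 * r0 * Rpower (2 * (r0 - rt)) (ga - 2) / 2 * (1 + s)) with
        (r0 * r0 * (1 + s) / 2 * Rpower (2 * (r0 - rt)) (ga - 2)) by (unfold Rdiv; ring).
      apply Rmult_le_compat_l. assert (0 <= r0 * r0) by nra. apply Rmult_le_pos. apply Rmult_le_pos. nra. lra. lra.
      apply pw_anti; lra.
  - apply pw_anti; lra.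
Qed.

Lemma reg2 al be ga t0 rt r0 s : 1 < ga < 2 -> 0 <= al -> 0 <= be -> 0 <= rt <= t0 -> t0 + 2 <= r0 ->
  (r0 - rt) * (r0 - rt) / (2 * (r0 * r0)) <= 1 + s -> s <= 1 ->
  gfun al be ga t0 rt r0 s <=
  Rpower (r0 * r0 * (1 + s) / 2 * Rpower (4 * (r0 * r0 * (1 + s))) ((ga - 2) / 2)) (- al)
  * Rpower (r0 * r0 * (1 + s) / 8) (- be / 2).
Proof.
  intros Hg Hal Hbe Hrt Hr0 Hp Hs1.
  assert (Hr0p : 0 < r0) by lra.
  assert (Ha : 0 < (r0 - rt) * (r0 - rt) / (2 * (r0 * r0))).
  { apply Rdiv_lt_0_compat; nra. }
  assert (Hs : -1 <= s) by lra.
  assert (Hpp : 0 < 1 + s) by lra.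
  assert (Hap : (r0 - rt) * (r0 - rt) <= 2 * (r0 * r0) * (1 + s)).
  { apply Rmult_le_reg_r with (/ (2 * (r0 * r0))). apply Rinv_0_lt_compat; nra.
    replace (2 * (r0 * r0) * (1 + s) * / (2 * (r0 * r0))) with (1 + s) by (field; lra). exact Hp. }
  assert (HE : 0 < Rpower (r0 - t0) ga) by apply pw_pos.
  pose proof (RR_pos r0 rt s ltac:(lra) ltac:(lra) Hs) as HR.
  assert (HLu : LL r0 rt s <= 4 * (r0 * r0 * (1 + s))).
  { rewrite LL_eq. assert (r0 * rt * (1 + s) <= r0 * r0 * (1 + s)) by (apply Rmult_le_compat_r; nra). nra. }
  assert (HLl : r0 * r0 * (1 + s) / 8 <= LL r0 rt s).
  { rewrite LL_eq. destruct (Rle_dec (r0 / 2) rt).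
    - assert (r0 * r0 * (1 + s) <= 2 * r0 * rt * (1 + s)).
      { apply Rmult_le_compat_r. lra. nra. }
      assert (0 <= r0 * r0 * (1 + s)) by nra. nra.
    - assert (r0 * r0 * (1 + s) <= 2 * r0 * r0) by (assert (0 <= r0 * r0) by nra; nra).
      assert (0 <= r0 * rt * (1 + s)) by (apply Rmult_le_pos; nra).
      nra. }
  assert (HL0 : 0 < LL r0 rt s) by (assert (0 < r0 * r0 * (1 + s) / 8) by (apply Rdiv_lt_0_compat; nra); lra).
  unfold gfun.
  apply Rmult_le_compat.
  - left; apply pw_pos.
  - left; apply pw_pos.
  - apply pw_anti; try lra.
    + apply Rmult_lt_0_compat. apply Rdiv_lt_0_compat; nra. apply pw_pos.
    + eapply Rle_trans. 2: apply Q_lower; lra.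
      assert (r0 * r0 * (1 + s) / 2 * Rpower (4 * (r0 * r0 * (1 + s))) ((ga - 2) / 2)
              <= r0 * r0 * (1 + s) / 2 * Rpower (RR r0 rt s) (ga - 2)).
      { apply Rmult_le_compat_l. left; apply Rdiv_lt_0_compat; nra.
        unfold RR. rewrite pw_sqrt by auto. apply pw_anti; lra. }
      lra.
  - unfold RR. rewrite pw_sqrt by auto.
    apply pw_anti; try lra.
Qed.

Ltac pos := first [ assumption | apply exp_pos | (apply Rmult_lt_0_compat; pos) | (apply Rinv_0_lt_compat; pos) | lra ].
Ltac lnexp := repeat match goal with
 | |- context [ln (?x * ?y)] => rewrite (ln_mult x y) by pos
 | |- context [ln (/ ?x)] => rewrite (ln_Rinv x) by pos
 | |- context [ln (exp ?x)] => rewrite (ln_exp x)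
 end.

Lemma reg2_id al be ga r0 p : 0 < r0 -> 0 < p ->
  Rpower (r0 * r0 * p / 2 * Rpower (4 * (r0 * r0 * p)) ((ga - 2) / 2)) (- al)
  * Rpower (r0 * r0 * p / 8) (- be / 2)
  = Rpower 2 ((3 - ga) * al + 3 * be / 2) * Rpower r0 (- (al * ga + be)) * Rpower p (- (al * ga + be) / 2).
Proof.
  intros Hr Hp. replace 4 with (2 * 2) by ring. replace 8 with (2 * 2 * 2) by ring.
  unfold Rpower, Rdiv. lnexp. rewrite <- !exp_plus. f_equal. field.
Qed.

Lemma d_pw x e : 0 < x -> is_derive (fun y => Rpower y e) x (e * Rpower x (e - 1)).
Proof. intros H. apply is_derive_Reals. apply derivable_pt_lim_power. auto. Qed.

Lemma c_pw (f : R -> R) x e : continuous f x -> 0 < f x -> continuous (fun y => Rpower (f y) e) x.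
Proof.
  intros Hf Hp. apply (ccomp f (fun z => Rpower z e)); auto. apply exd_cont. eexists. apply d_pw; auto.
Qed.

Lemma pw_m1 x : 0 < x -> Rpower x (-1) = / x.
Proof. intros. replace (-1) with (- (1)) by ring. rewrite Rpower_Ropp, Rpower_1; auto. Qed.

Lemma int1 al A E p1 : al <> 1 -> 0 < A -> 0 < E -> 0 <= p1 ->
  RInt (fun s => Rpower (A * (1 + s) + E) (- al)) (-1) (-1 + p1)
  = (Rpower (A * p1 + E) (1 - al) - Rpower E (1 - al)) / ((1 - al) * A).
Proof.
  intros Hal HA HE Hp.
  pose (Fn := fun s => Rpower (A * (1 + s) + E) (1 - al) / ((1 - al) * A)).
  assert (H : is_RInt (fun s => Rpower (A * (1 + s) + E) (- al)) (-1) (-1 + p1) (minus (Fn (-1 + p1)) (Fn (-1)))).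
  { apply (is_RInt_derive (V:=R_CompleteNormedModule)).
    - intros x Hx. rewrite Rmin_left, Rmax_right in Hx by lra.
      unfold Fn. assert (HX : 0 < A * (1 + x) + E) by (assert (0 <= A * (1 + x)) by (apply Rmult_le_pos; lra); lra).
      assert (Hd : is_derive (fun s => A * (1 + s) + E) x A) by (auto_derive; auto; ring).
      pose proof (dcomp _ _ x _ _ Hd (d_pw _ (1 - al) HX)) as H1.
      pose proof (is_derive_scal _ x (/ ((1 - al) * A)) _ H1) as H2.
      apply (dval _ _ (/ ((1 - al) * A) * ((1 - al) * Rpower (A * (1 + x) + E) (1 - al - 1) * A))).
      2: { lazymatch goal with |- ?x = ?y => change (@eq R x y) end. replace (1 - al - 1) with (- al) by ring.
           field. split; [lra | intro; apply Hal; lra]. }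
      eapply is_derive_ext. 2: exact H2.
      intros t. simpl. unfold Rdiv. ring.
    - intros x Hx. rewrite Rmin_left, Rmax_right in Hx by lra.
      apply c_pw. apply cplus. apply cmul. apply cconst. apply cplus. apply cconst. apply cid. apply cconst. assert (0 <= A * (1 + x)) by (apply Rmult_le_pos; lra); lra. }
  apply (is_RInt_unique (V:=R_CompleteNormedModule)) in H. rewrite H.
  unfold Fn, minus, plus, opp. change ((Rpower (A * (1 + (-1 + p1)) + E) (1 - al) / ((1 - al) * A) + - (Rpower (A * (1 + -1) + E) (1 - al) / ((1 - al) * A))) = (Rpower (A * p1 + E) (1 - al) - Rpower E (1 - al)) / ((1 - al) * A)).
  replace (A * (1 + (-1 + p1)) + E) with (A * p1 + E) by ring.
  replace (A * (1 + -1) + E) with E by ring. field. split; [lra | intro; apply Hal; lra].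
Qed.

Lemma int1_log al A E p1 : al = 1 -> 0 < A -> 0 < E -> 0 <= p1 ->
  RInt (fun s => Rpower (A * (1 + s) + E) (- al)) (-1) (-1 + p1)
  = (ln (A * p1 + E) - ln E) / A.
Proof.
  intros Hal HA HE Hp.
  pose (Fn := fun s => ln (A * (1 + s) + E) / A).
  assert (H : is_RInt (fun s => Rpower (A * (1 + s) + E) (- al)) (-1) (-1 + p1) (minus (Fn (-1 + p1)) (Fn (-1)))).
  { apply (is_RInt_derive (V:=R_CompleteNormedModule)).
    - intros x Hx. rewrite Rmin_left, Rmax_right in Hx by lra.
      unfold Fn. assert (HX : 0 < A * (1 + x) + E) by (assert (0 <= A * (1 + x)) by (apply Rmult_le_pos; lra); lra).
      apply (dval _ _ (/ A * (A * / (A * (1 + x) + E)))).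
      2: { lazymatch goal with |- ?x = ?y => change (@eq R x y) end. rewrite Hal.
           replace (- (1)) with (-1) by ring. rewrite pw_m1 by auto. field. split; lra. }
      assert (H1 : is_derive (fun s => ln (A * (1 + s) + E)) x (A * / (A * (1 + x) + E))).
      { auto_derive. auto. field. lra. }
      pose proof (is_derive_scal _ x (/ A) _ H1) as H2.
      eapply is_derive_ext. 2: exact H2.
      intros t. simpl. unfold Rdiv. ring.
    - intros x Hx. rewrite Rmin_left, Rmax_right in Hx by lra.
      apply (c_pw (fun s => A * (1 + s) + E)). apply cplus. apply cmul. apply cconst. apply cplus. apply cconst. apply cid. apply cconst. assert (0 <= A * (1 + x)) by (apply Rmult_le_pos; lra); lra. }
  apply (is_RInt_unique (V:=R_CompleteNormedModule)) in H. rewrite H.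
  unfold Fn, minus, plus, opp. change (ln (A * (1 + (-1 + p1)) + E) / A + - (ln (A * (1 + -1) + E) / A) = (ln (A * p1 + E) - ln E) / A).
  replace (A * (1 + (-1 + p1)) + E) with (A * p1 + E) by ring.
  replace (A * (1 + -1) + E) with E by ring. field. lra.
Qed.

Lemma int2 k p1 : k <> 1 -> 0 < p1 -> p1 <= 2 ->
  RInt (fun s => Rpower (1 + s) (- k)) (-1 + p1) 1
  = (Rpower 2 (1 - k) - Rpower p1 (1 - k)) / (1 - k).
Proof.
  intros Hk Hp Hp2.
  pose (Fn := fun s => Rpower (1 + s) (1 - k) / (1 - k)).
  assert (H : is_RInt (fun s => Rpower (1 + s) (- k)) (-1 + p1) 1 (minus (Fn 1) (Fn (-1 + p1)))).
  { apply (is_RInt_derive (V:=R_CompleteNormedModule)).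
    - intros x Hx. rewrite Rmin_left, Rmax_right in Hx by lra.
      unfold Fn. assert (HX : 0 < 1 + x) by lra.
      assert (Hd : is_derive (fun s => 1 + s) x 1) by (auto_derive; auto; ring).
      pose proof (dcomp _ _ x _ _ Hd (d_pw _ (1 - k) HX)) as H1.
      pose proof (is_derive_scal _ x (/ (1 - k)) _ H1) as H2.
      apply (dval _ _ (/ (1 - k) * ((1 - k) * Rpower (1 + x) (1 - k - 1) * 1))).
      2: { lazymatch goal with |- ?x = ?y => change (@eq R x y) end. replace (1 - k - 1) with (- k) by ring.
           field. intro; apply Hk; lra. }
      eapply is_derive_ext. 2: exact H2.
      intros t. simpl. unfold Rdiv. ring.
    - intros x Hx. rewrite Rmin_left, Rmax_right in Hx by lra.
      apply (c_pw (fun s => 1 + s)). apply cplus. apply cconst. apply cid. lra. }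
  apply (is_RInt_unique (V:=R_CompleteNormedModule)) in H. rewrite H.
  unfold Fn, minus, plus, opp. change (Rpower (1 + 1) (1 - k) / (1 - k) + - (Rpower (1 + (-1 + p1)) (1 - k) / (1 - k)) = (Rpower 2 (1 - k) - Rpower p1 (1 - k)) / (1 - k)).
  replace (1 + (-1 + p1)) with p1 by ring. replace (1 + 1) with 2 by ring. field. intro; apply Hk; lra.
Qed.

Lemma pw_ge_self t q : 0 < t -> t <= 1 -> q <= 1 -> t <= Rpower t q.
Proof.
  intros H1 H2 H3. rewrite <- (Rpower_1 t) at 1 by auto. unfold Rpower. apply exp_mono.
  assert (ln t <= 0) by (rewrite <- ln_1; apply ln_le; lra). nra.
Qed.

Lemma subadd x y q : 0 < x -> 0 < y -> 0 <= q <= 1 -> Rpower (x + y) q <= Rpower x q + Rpower y q.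
Proof.
  intros Hx Hy Hq.
  set (t := x / (x + y)).
  assert (Ht : 0 < t < 1).
  { unfold t. split. apply Rdiv_lt_0_compat; lra. apply Rmult_lt_reg_r with (x + y). lra.
    unfold Rdiv. rewrite Rmult_assoc, Rinv_l by lra. lra. }
  assert (E1 : x = (x + y) * t) by (unfold t; field; lra).
  assert (E2 : y = (x + y) * (1 - t)) by (unfold t; field; lra).
  assert (T1 : t <= Rpower t q) by (apply pw_ge_self; lra).
  assert (T2 : 1 - t <= Rpower (1 - t) q) by (apply pw_ge_self; lra).
  assert (F1 : Rpower x q = Rpower (x + y) q * Rpower t q).
  { rewrite Rpower_mult_distr by lra. rewrite <- E1. reflexivity. }
  assert (F2 : Rpower y q = Rpower (x + y) q * Rpower (1 - t) q).
  { rewrite Rpower_mult_distr by lra. rewrite <- E2. reflexivity. }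
  rewrite F1, F2.
  pose proof (pw_pos (x + y) q). assert (0 <= Rpower (x + y) q * (Rpower t q + Rpower (1 - t) q - 1)) by (apply Rmult_le_pos; lra). nra.
Qed.

Lemma ln_bound y eta : 0 < y -> 0 < eta -> ln y <= Rpower y eta / eta.
Proof.
  intros Hy He.
  pose proof (exp_ineq1_le (eta * ln y)) as H.
  unfold Rpower. apply Rmult_le_reg_l with eta; auto.
  replace (eta * (exp (eta * ln y) / eta)) with (exp (eta * ln y)) by (field; lra).
  lra.
Qed.

Lemma c_inv (f : R -> R) x : continuous f x -> f x <> 0 -> continuous (fun y => / f y) x.
Proof.
  intros Hf Hn. apply (ccomp f (fun z => / z)); auto. apply exd_cont. auto_derive. auto.
Qed.

Lemma RR_cont r0 rt s : 0 <= rt -> rt < r0 -> -1 <= s -> continuous (RR r0 rt) s.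
Proof.
  intros H1 H2 H3.
  pose proof (RR_sq r0 rt s H1 H2 H3). pose proof (RR_pos r0 rt s H1 H2 H3).
  assert (HL : 0 < LL r0 rt s) by nra.
  apply exd_cont. unfold RR. unfold LL in *. auto_derive. auto.
Qed.

Lemma gfun_cont al be ga t0 rt r0 s : 0 <= rt <= t0 -> t0 + 2 <= r0 -> -1 <= s <= 1 ->
  continuous (gfun al be ga t0 rt r0) s.
Proof.
  intros Hrt Hr0 Hs.
  assert (HR : 0 < RR r0 rt s) by (apply RR_pos; lra).
  assert (HRc : continuous (RR r0 rt) s) by (apply RR_cont; lra).
  unfold gfun. apply cmul.
  - apply (c_pw (fun s => (1 + (r0 * s + rt) / RR r0 rt s) * Rpower (RR r0 rt s) ga + Rpower (r0 - t0) ga)).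
    + apply cplus. apply cmul. apply cplus. apply cconst. apply cmul.
      apply cplus. apply cmul. apply cconst. apply cid. apply cconst.
      apply c_inv; auto. lra.
      apply (c_pw (RR r0 rt)); auto. apply cconst.
    + apply Q_pos; try lra. apply pw_pos.
  - apply (c_pw (RR r0 rt)); auto.
Qed.

Definition clamp s := Rmax (-1) (Rmin 1 s).

Lemma clamp_lip x y : Rabs (clamp x - clamp y) <= Rabs (x - y).
Proof.
  unfold clamp, Rmax, Rmin.
  repeat (destruct Rle_dec); unfold Rabs; repeat (destruct Rcase_abs); lra.
Qed.

Lemma clamp_cont x : continuous clamp x.
Proof.
  apply filterlim_locally. intros eps. exists eps. intros y Hy.
  apply ball_R in Hy. apply ball_R. eapply Rle_lt_trans. apply clamp_lip. auto.
Qed.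

Lemma clamp_in x : -1 <= clamp x <= 1.
Proof. unfold clamp, Rmax, Rmin. repeat (destruct Rle_dec); lra. Qed.

Lemma clamp_id x : -1 <= x <= 1 -> clamp x = x.
Proof. intros. unfold clamp, Rmax, Rmin. repeat (destruct Rle_dec); lra. Qed.

Lemma gcl_cont al be ga t0 rt r0 x : 0 <= rt <= t0 -> t0 + 2 <= r0 ->
  continuous (fun s => gfun al be ga t0 rt r0 (clamp s)) x.
Proof.
  intros. apply (ccomp clamp). apply clamp_cont. apply gfun_cont; auto. apply clamp_in.
Qed.

Lemma dot_bound (u w : vec3) : dot3 u u = 1 -> dot3 w w = 1 -> -1 <= dot3 u w <= 1.
Proof.
  destruct u as [[u1 u2] u3]; destruct w as [[w1 w2] w3]; simpl. intros Hu Hw.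
  assert (H : (u1 * w1 + u2 * w2 + u3 * w3) * (u1 * w1 + u2 * w2 + u3 * w3) <= 1).
  { pose proof (Rle_0_sqr (u1 * w2 - u2 * w1)). pose proof (Rle_0_sqr (u1 * w3 - u3 * w1)).
    pose proof (Rle_0_sqr (u2 * w3 - u3 * w2)). unfold Rsqr in *.
    assert ((u1 * w1 + u2 * w2 + u3 * w3) * (u1 * w1 + u2 * w2 + u3 * w3) +
      ((u1 * w2 - u2 * w1) * (u1 * w2 - u2 * w1) + (u1 * w3 - u3 * w1) * (u1 * w3 - u3 * w1) +
       (u2 * w3 - u3 * w2) * (u2 * w3 - u3 * w2)) =
      (u1 * u1 + u2 * u2 + u3 * u3) * (w1 * w1 + w2 * w2 + w3 * w3)) by ring.
    rewrite Hu, Hw in H2. lra. }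
  split; nra.
Qed.

Lemma sph_unit th ph : dot3 (sph th ph) (sph th ph) = 1.
Proof.
  unfold sph, dot3. pose proof (sin2_cos2 th). pose proof (sin2_cos2 ph). unfold Rsqr in *.
  replace (sin th * cos ph * (sin th * cos ph) + sin th * sin ph * (sin th * sin ph) + cos th * cos th)
    with (sin th * sin th * (sin ph * sin ph + cos ph * cos ph) + cos th * cos th) by ring.
  rewrite H0. lra.
Qed.

Lemma integrand_eq al be ga t0 rt (x0 w : vec3) :
  0 < norm3 x0 -> 0 <= rt < norm3 x0 -> dot3 w w = 1 ->
  integrand al be ga t0 rt x0 w = gfun al be ga t0 rt (norm3 x0) (dot3 (scal3 (/ norm3 x0) x0) w).
Proof.
  intros Hr Hrt Hw.
  set (r0 := norm3 x0) in *.
  assert (Hr0 : dot3 x0 x0 = r0 * r0).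
  { unfold r0, norm3. rewrite sqrt_sqrt. auto. destruct x0 as [[a b] c]; simpl. nra. }
  set (s := dot3 (scal3 (/ r0) x0) w).
  assert (Hs : dot3 x0 w = r0 * s).
  { unfold s. destruct x0 as [[a b] c]; destruct w as [[d e] f]; simpl. field. lra. }
  assert (HN : norm3 (add3 x0 (scal3 rt w)) = RR r0 rt s).
  { unfold norm3, RR, LL. f_equal.
    destruct x0 as [[a b] c]; destruct w as [[d e] f]; simpl in *.
    replace ((a + rt * d) * (a + rt * d) + (b + rt * e) * (b + rt * e) + (c + rt * f) * (c + rt * f))
      with ((a * a + b * b + c * c) + 2 * rt * (a * d + b * e + c * f) + rt * rt * (d * d + e * e + f * f)) by ring.
    rewrite Hr0, Hs, Hw. ring. }
  unfold integrand. fold r0. rewrite HN.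
  assert (HT : dot3 (scal3 (/ RR r0 rt s) (add3 x0 (scal3 rt w))) w = (r0 * s + rt) / RR r0 rt s).
  { destruct x0 as [[a b] c]; destruct w as [[d e] f]; simpl in *.
    unfold Rdiv.
    replace (/ RR r0 rt s * (a + rt * d) * d + / RR r0 rt s * (b + rt * e) * e + / RR r0 rt s * (c + rt * f) * f)
      with ((a * d + b * e + c * f + rt * (d * d + e * e + f * f)) * / RR r0 rt s) by ring.
    rewrite Hw, Hs. ring. }
  rewrite HT. unfold gfun. reflexivity.
Qed.

Lemma unit_u (x0 : vec3) : 0 < norm3 x0 -> dot3 (scal3 (/ norm3 x0) x0) (scal3 (/ norm3 x0) x0) = 1.
Proof.
  intros Hr.
  assert (Hr0 : dot3 x0 x0 = norm3 x0 * norm3 x0).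
  { unfold norm3. rewrite sqrt_sqrt. auto. destruct x0 as [[a b] c]; simpl. nra. }
  destruct x0 as [[a b] c]. simpl in *.
  replace (/ norm3 (a, b, c) * a * (/ norm3 (a, b, c) * a) + / norm3 (a, b, c) * b * (/ norm3 (a, b, c) * b) +
     / norm3 (a, b, c) * c * (/ norm3 (a, b, c) * c)) with ((a * a + b * b + c * c) / (norm3 (a, b, c) * norm3 (a, b, c))) by (field; lra).
  rewrite Hr0. field. lra.
Qed.

Lemma sphere_eq al be ga t0 rt (x0 : vec3) : 0 <= rt <= t0 -> t0 + 2 <= norm3 x0 ->
  sphere_integral (integrand al be ga t0 rt x0) = 2 * PI * RInt (gfun al be ga t0 rt (norm3 x0)) (-1) 1.
Proof.
  intros Hrt Hr0.
  assert (Hr : 0 < norm3 x0) by lra.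
  set (u := scal3 (/ norm3 x0) x0).
  assert (Hu : dot3 u u = 1) by (apply unit_u; auto).
  unfold sphere_integral.
  transitivity (RInt (fun ph => RInt (fun th => (fun s => gfun al be ga t0 rt (norm3 x0) (clamp s)) (dot3 u (sph th ph)) * sin th) 0 PI) 0 (2 * PI)).
  { apply RInt_ext. intros ph _. apply RInt_ext. intros th _.
    rewrite integrand_eq; try lra. 2: apply sph_unit.
    rewrite clamp_id. reflexivity. apply dot_bound; auto. apply sph_unit. }
  pose proof (FH_gen (fun s => gfun al be ga t0 rt (norm3 x0) (clamp s)) u) as FH.
  cbv beta in FH. rewrite FH; auto.
  - f_equal. apply RInt_ext. intros x Hx. rewrite Rmin_left, Rmax_right in Hx by lra.
    rewrite clamp_id; auto. lra.
  - intros; apply gcl_cont; lra.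
Qed.

Ltac pos2 := first [ assumption | apply exp_pos | apply pw_pos
  | (apply Rmult_lt_0_compat; pos2) | (apply Rinv_0_lt_compat; pos2)
  | (apply Rplus_lt_0_compat; pos2) | lra ].
Ltac lnexp2 := repeat match goal with
 | |- context [ln (?x * ?y)] => rewrite (ln_mult x y) by pos2
 | |- context [ln (/ ?x)] => rewrite (ln_Rinv x) by pos2
 | |- context [ln (exp ?x)] => rewrite (ln_exp x)
 end.
Ltac pweq := unfold Rpower, Rdiv; lnexp2; rewrite <- ?exp_plus; f_equal; field.

Lemma RInt_mulc (f : R -> R) c a b : ex_RInt f a b -> RInt (fun s => f s * c) a b = RInt f a b * c.
Proof.
  intros H. rewrite (RInt_ext (V:=R_CompleteNormedModule) _ (fun s => scal c (f s))).
  rewrite (RInt_scal (V:=R_CompleteNormedModule)) by auto. change (c * RInt f a b = RInt f a b * c). ring.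
  intros; change (f x * c = c * f x); ring.
Qed.

Lemma RInt_cmul (f : R -> R) c a b : ex_RInt f a b -> RInt (fun s => c * f s) a b = c * RInt f a b.
Proof.
  intros H. rewrite (RInt_ext (V:=R_CompleteNormedModule) _ (fun s => scal c (f s))).
  rewrite (RInt_scal (V:=R_CompleteNormedModule)) by auto. reflexivity. intros; reflexivity.
Qed.

Lemma RInt_le' (f g : R -> R) a b : a <= b -> ex_RInt f a b -> ex_RInt g a b ->
  (forall x, a < x < b -> f x <= g x) -> RInt f a b <= RInt g a b.
Proof. intros; apply RInt_le; auto. Qed.


Lemma split_bound al be ga t0 rt r0 :
  1 < ga < 2 -> 0 <= al -> 0 <= be -> 0 <= rt <= t0 -> t0 + 2 <= r0 ->
  let a := r0 - rt in let E := Rpower (r0 - t0) ga in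
  let A := r0 * r0 * Rpower (2 * a) (ga - 2) / 2 in
  let p1 := a * a / (2 * (r0 * r0)) in
  let k := (al * ga + be) / 2 in
  RInt (gfun al be ga t0 rt r0) (-1) 1 <=
    RInt (fun s => Rpower (A * (1 + s) + E) (- al)) (-1) (-1 + p1) * Rpower a (- be)
    + Rpower 2 ((3 - ga) * al + 3 * be / 2) * Rpower r0 (- (al * ga + be))
      * RInt (fun s => Rpower (1 + s) (- k)) (-1 + p1) 1.
Proof.
  intros Hg Hal Hbe Hrt Hr0 a E A p1 k.
  assert (Ha : 2 <= a) by (unfold a; lra).
  assert (Hr : 0 < r0) by lra.
  assert (Hp1 : 0 < p1) by (unfold p1; apply Rdiv_lt_0_compat; nra).
  assert (Hp1b : p1 <= 1 / 2).
  { unfold p1. apply Rmult_le_reg_r with (2 * (r0 * r0)). nra.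
    replace (a * a / (2 * (r0 * r0)) * (2 * (r0 * r0))) with (a * a) by (field; lra).
    unfold a. nra. }
  assert (HA : 0 < A) by (unfold A; apply Rmult_lt_0_compat; [apply Rmult_lt_0_compat; [nra | apply pw_pos] | lra]).
  assert (HE : 0 < E) by apply pw_pos.
  assert (Exg : forall u v, -1 <= u <= 1 -> -1 <= v <= 1 -> ex_RInt (gfun al be ga t0 rt r0) u v).
  { intros u v Hu Hv. apply exRc. intros z Hz. apply gfun_cont; try lra.
    split. apply Rle_trans with (Rmin u v). apply Rmin_glb; lra. apply Hz.
    apply Rle_trans with (Rmax u v). apply Hz. apply Rmax_lub; lra. }
  rewrite <- (RInt_Chasles (V:=R_CompleteNormedModule) _ (-1) (-1 + p1) 1) by (apply Exg; lra).
  change (plus ?x ?y) with (x + y).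
  apply Rplus_le_compat.
  - assert (Ex1 : ex_RInt (fun s => Rpower (A * (1 + s) + E) (- al)) (-1) (-1 + p1)).
    { apply exRc. intros z Hz. rewrite Rmin_left, Rmax_right in Hz by lra.
      apply (c_pw (fun s => A * (1 + s) + E)). apply cplus. apply cmul. apply cconst. apply cplus. apply cconst. apply cid. apply cconst.
      assert (0 <= A * (1 + z)) by (apply Rmult_le_pos; lra). lra. }
    rewrite <- RInt_mulc by auto.
    apply RInt_le'. lra. apply Exg; lra.
    apply exRc. intros z Hz. rewrite Rmin_left, Rmax_right in Hz by lra.
    apply cmul. apply (c_pw (fun s => A * (1 + s) + E)). apply cplus. apply cmul. apply cconst. apply cplus. apply cconst. apply cid. apply cconst.
    assert (0 <= A * (1 + z)) by (apply Rmult_le_pos; lra). lra. apply cconst.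
    intros x Hx. unfold A, E, a. apply reg1; try lra. unfold p1, a in Hx. lra.
  - assert (Ex2 : ex_RInt (fun s => Rpower (1 + s) (- k)) (-1 + p1) 1).
    { apply exRc. intros z Hz. rewrite Rmin_left, Rmax_right in Hz by lra.
      apply (c_pw (fun s => 1 + s)). apply cplus. apply cconst. apply cid. lra. }
    rewrite <- RInt_cmul by auto.
    apply RInt_le'. lra. apply Exg; lra.
    apply exRc. intros z Hz. rewrite Rmin_left, Rmax_right in Hz by lra.
    apply cmul. apply cconst. apply (c_pw (fun s => 1 + s)). apply cplus. apply cconst. apply cid. lra.
    intros x Hx. eapply Rle_trans. apply reg2; try lra. unfold p1, a in Hx. lra.
    rewrite reg2_id by lra. unfold k. right. ring_simplify. f_equal. f_equal. field.
Qed.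

Lemma idA al be ga r0 a : 0 < r0 -> 0 < a ->
  Rpower (r0 * r0 * Rpower (2 * a) (ga - 2) / 2 * (a * a / (2 * (r0 * r0)))) (1 - al)
  * Rpower (r0 * r0 * Rpower (2 * a) (ga - 2) / 2) (-1) * Rpower a (- be)
  = Rpower 2 ((1 - al) * (ga - 4) - ga + 3) * (Rpower r0 (-2) * Rpower a (2 - (al * ga + be))).
Proof. intros Hr Ha. pweq. Qed.

Lemma idB al be ga r0 a D : 0 < r0 -> 0 < a -> 0 < D ->
  Rpower (Rpower D ga) (1 - al) * Rpower (r0 * r0 * Rpower (2 * a) (ga - 2) / 2) (-1) * Rpower a (- be)
  = Rpower 2 (3 - ga) * (Rpower a (2 - be - ga) * Rpower r0 (-2) * Rpower D ((1 - al) * ga)).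
Proof. intros. pweq. Qed.

Lemma idC be ga r0 a : 0 < r0 -> 0 < a ->
  Rpower (r0 * r0 * Rpower (2 * a) (ga - 2) / 2) (-1) * Rpower a (- be)
  = Rpower 2 (3 - ga) * (Rpower r0 (-2) * Rpower a (2 - ga - be)).
Proof. intros. pweq. Qed.

Lemma idAp ga r0 a : 0 < r0 -> 0 < a ->
  r0 * r0 * Rpower (2 * a) (ga - 2) / 2 * (a * a / (2 * (r0 * r0))) = Rpower 2 (ga - 4) * Rpower a ga.
Proof. intros. apply ln_inv; [unfold Rdiv; pos2 | pos2 | ]. unfold Rpower, Rdiv; lnexp2. field. Qed.

Lemma id2 al be ga r0 a : 0 < r0 -> 0 < a ->
  Rpower 2 ((3 - ga) * al + 3 * be / 2) * Rpower r0 (- (al * ga + be)) * Rpower (a * a / (2 * (r0 * r0))) (1 - (al * ga + be) / 2)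
  = Rpower 2 ((3 - ga) * al + 3 * be / 2) * Rpower 2 ((al * ga + be) / 2 - 1) * (Rpower r0 (-2) * Rpower a (2 - (al * ga + be))).
Proof. intros. pweq. Qed.

Lemma idT1 al be ga eps r0 a : 0 < r0 -> 0 < a ->
  Rpower a (2 - be - ga + eps) * Rpower r0 (-2) * Rpower a ((1 - al) * ga)
  = Rpower r0 (-2) * Rpower a (2 - (al * ga + be) + eps).
Proof. intros. pweq. Qed.

Definition K2 al be ga := Rpower 2 ((3 - ga) * al + 3 * be / 2) * Rpower 2 ((al * ga + be) / 2 - 1) / ((al * ga + be) / 2 - 1).
Definition Ka al ga := Rpower 2 ((1 - al) * (ga - 4) - ga + 3) / (1 - al).
Definition Kb al ga := Rpower 2 (3 - ga) / (al - 1).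
Definition Kc ga eps := Rpower (1 + Rpower 2 (ga - 4)) (eps / ga) / (eps / ga) * Rpower 2 (3 - ga).
Definition Kall al be ga eps := Rabs (Ka al ga) + Rabs (Kb al ga) + Rabs (Kc ga eps) + Rabs (K2 al be ga).

Lemma part2 al be ga eps t0 rt r0 : 1 < ga < 2 -> 0 <= al -> 0 <= be -> be + al * ga > 2 -> 0 <= eps ->
  0 <= rt <= t0 -> t0 + 2 <= r0 ->
  Rpower 2 ((3 - ga) * al + 3 * be / 2) * Rpower r0 (- (al * ga + be))
      * RInt (fun s => Rpower (1 + s) (- ((al * ga + be) / 2))) (-1 + (r0 - rt) * (r0 - rt) / (2 * (r0 * r0))) 1
  <= Rabs (K2 al be ga) * (Rpower (r0 - rt) (2 - be - ga + eps) * Rpower r0 (-2) * Rpower (r0 - rt) ((1 - al) * ga)).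
Proof.
  intros Hg Hal Hbe Hk Heps Hrt Hr0.
  set (a := r0 - rt). set (k := (al * ga + be) / 2). set (p1 := a * a / (2 * (r0 * r0))).
  assert (Ha : 2 <= a) by (unfold a; lra).
  assert (Hr : 0 < r0) by lra.
  assert (Hk1 : 1 < k) by (unfold k; lra).
  assert (Hp1 : 0 < p1) by (unfold p1; apply Rdiv_lt_0_compat; nra).
  assert (Hp1b : p1 <= 2).
  { unfold p1. apply Rmult_le_reg_r with (2 * (r0 * r0)). nra.
    replace (a * a / (2 * (r0 * r0)) * (2 * (r0 * r0))) with (a * a) by (field; lra).
    unfold a. nra. }
  rewrite int2 by lra.
  set (c2 := Rpower 2 ((3 - ga) * al + 3 * be / 2)).
  assert (Hc2 : 0 < c2) by apply pw_pos.
  assert (HJ : (Rpower 2 (1 - k) - Rpower p1 (1 - k)) / (1 - k) <= Rpower p1 (1 - k) / (k - 1)).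
  { pose proof (pw_pos 2 (1 - k)). unfold Rdiv.
    replace ((Rpower 2 (1 - k) - Rpower p1 (1 - k)) * / (1 - k)) with ((Rpower p1 (1 - k) - Rpower 2 (1 - k)) * / (k - 1)) by (field; lra).
    apply Rmult_le_compat_r. left; apply Rinv_0_lt_compat; lra. lra. }
  assert (HK2 : 0 < K2 al be ga).
  { unfold K2. apply Rdiv_lt_0_compat. apply Rmult_lt_0_compat; apply pw_pos. fold k. lra. }
  rewrite Rabs_right by lra.
  eapply Rle_trans. apply Rmult_le_compat_l. apply Rmult_le_pos; left; [auto | apply pw_pos]. exact HJ.
  replace (c2 * Rpower r0 (- (al * ga + be)) * (Rpower p1 (1 - k) / (k - 1)))
    with ((c2 * Rpower r0 (- (al * ga + be)) * Rpower p1 (1 - k)) / (k - 1)) by (field; lra).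
  unfold c2, p1, k. rewrite id2 by lra. rewrite idT1 by lra.
  unfold K2. fold k.
  replace (Rpower 2 ((3 - ga) * al + 3 * be / 2) * Rpower 2 (k - 1) * (Rpower r0 (-2) * Rpower a (2 - (al * ga + be))) / (k - 1))
    with (Rpower 2 ((3 - ga) * al + 3 * be / 2) * Rpower 2 (k - 1) / (k - 1) * (Rpower r0 (-2) * Rpower a (2 - (al * ga + be)))) by (field; lra).
  apply Rmult_le_compat_l. left. apply Rdiv_lt_0_compat. apply Rmult_lt_0_compat; apply pw_pos. lra.
  apply Rmult_le_compat_l. left; apply pw_pos.
  apply pw_expo; lra.
Qed.

Lemma part1 al be ga eps t0 rt r0 : 1 < ga < 2 -> 0 <= al -> 0 <= be -> be + al * ga > 2 ->
  (al <> 1 -> eps = 0) -> (al = 1 -> 0 < eps) ->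
  0 <= rt <= t0 -> t0 + 2 <= r0 ->
  RInt (fun s => Rpower (r0 * r0 * Rpower (2 * (r0 - rt)) (ga - 2) / 2 * (1 + s) + Rpower (r0 - t0) ga) (- al))
       (-1) (-1 + (r0 - rt) * (r0 - rt) / (2 * (r0 * r0))) * Rpower (r0 - rt) (- be)
  <= (Rabs (Ka al ga) + Rabs (Kb al ga) + Rabs (Kc ga eps)) *
     (Rpower (r0 - rt) (2 - be - ga + eps) * Rpower r0 (-2) * Rpower (r0 - rt) ((1 - al) * ga)
      + Rpower (r0 - rt) (2 - be - ga + eps) * Rpower r0 (-2) * Rpower (r0 - t0) ((1 - al) * ga)).
Proof.
  intros Hg Hal Hbe Hk He0 He1 Hrt Hr0.
  set (a := r0 - rt). set (D := r0 - t0). set (A := r0 * r0 * Rpower (2 * a) (ga - 2) / 2).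
  set (p1 := a * a / (2 * (r0 * r0))). set (E := Rpower D ga).
  set (T1 := Rpower a (2 - be - ga + eps) * Rpower r0 (-2) * Rpower a ((1 - al) * ga)).
  set (T2 := Rpower a (2 - be - ga + eps) * Rpower r0 (-2) * Rpower D ((1 - al) * ga)).
  assert (Ha : 2 <= a) by (unfold a; lra).
  assert (HD : 2 <= D) by (unfold D; lra).
  assert (Hr : 0 < r0) by lra.
  assert (Hp1 : 0 < p1) by (unfold p1; apply Rdiv_lt_0_compat; nra).
  assert (HA : 0 < A) by (unfold A; apply Rmult_lt_0_compat; [apply Rmult_lt_0_compat; [nra | apply pw_pos] | lra]).
  assert (HE : 0 < E) by apply pw_pos.
  assert (HT1 : 0 <= T1) by (unfold T1; left; repeat apply Rmult_lt_0_compat; apply pw_pos).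
  assert (HT2 : 0 <= T2) by (unfold T2; left; repeat apply Rmult_lt_0_compat; apply pw_pos).
  assert (Hab : 0 < Rpower a (- be)) by apply pw_pos.
  assert (HAp : A * p1 = Rpower 2 (ga - 4) * Rpower a ga) by (unfold A, p1; apply idAp; lra).
  assert (Hsum : forall K x, 0 <= x -> x <= Rabs K * T1 \/ x <= Rabs K * T2 ->
     (K = Ka al ga \/ K = Kb al ga \/ K = Kc ga eps) ->
     x <= (Rabs (Ka al ga) + Rabs (Kb al ga) + Rabs (Kc ga eps)) * (T1 + T2)).
  { intros K x Hx Hor HK. pose proof (Rabs_pos (Ka al ga)). pose proof (Rabs_pos (Kb al ga)).
    pose proof (Rabs_pos (Kc ga eps)).
    assert (Rabs K <= Rabs (Ka al ga) + Rabs (Kb al ga) + Rabs (Kc ga eps)) by (destruct HK as [->|[->| ->]]; lra).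
    destruct Hor as [Hor|Hor].
    - eapply Rle_trans. exact Hor. apply Rmult_le_compat; try lra. apply Rabs_pos.
    - eapply Rle_trans. exact Hor. apply Rmult_le_compat; try lra. apply Rabs_pos. }
  destruct (Rtotal_order al 1) as [Hlt | [Heq | Hgt]].
  -
    assert (Heps : eps = 0) by (apply He0; lra).
    rewrite int1 by lra.
    fold p1.
    assert (Hv : (Rpower (A * p1 + E) (1 - al) - Rpower E (1 - al)) / ((1 - al) * A)
                 <= Rpower (A * p1) (1 - al) / ((1 - al) * A)).
    { unfold Rdiv. apply Rmult_le_compat_r. left; apply Rinv_0_lt_compat; nra.
      pose proof (subadd (A * p1) E (1 - al) ltac:(nra) HE ltac:(lra)). lra. }
    apply (Hsum (Ka al ga)).
    { apply Rmult_le_pos; [|lra].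
      unfold Rdiv. apply Rmult_le_pos. pose proof (subadd (A * p1) E (1 - al) ltac:(nra) HE ltac:(lra)).
      assert (Rpower E (1 - al) <= Rpower (A * p1 + E) (1 - al)) by (apply pw_mono; nra).
      lra. left; apply Rinv_0_lt_compat; nra. }
    2: auto.
    left. eapply Rle_trans. apply Rmult_le_compat_r. lra. exact Hv.
    replace (Rpower (A * p1) (1 - al) / ((1 - al) * A) * Rpower a (- be))
      with (/ (1 - al) * (Rpower (A * p1) (1 - al) * Rpower A (-1) * Rpower a (- be))).
    2: { rewrite pw_m1 by auto. field. split; lra. }
    unfold A, p1. rewrite idA by lra. fold A p1.
    unfold T1. rewrite idT1 by lra.
    assert (HKa : 0 < Ka al ga) by (unfold Ka; apply Rdiv_lt_0_compat; [apply pw_pos | lra]).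
    rewrite Rabs_right by lra. unfold Ka.
    replace (/ (1 - al) * (Rpower 2 ((1 - al) * (ga - 4) - ga + 3) * (Rpower r0 (-2) * Rpower a (2 - (al * ga + be)))))
      with (Rpower 2 ((1 - al) * (ga - 4) - ga + 3) / (1 - al) * (Rpower r0 (-2) * Rpower a (2 - (al * ga + be)))) by (field; lra).
    apply Rmult_le_compat_l. left; exact HKa.
    apply Rmult_le_compat_l. left; apply pw_pos. apply pw_expo; lra.
  -
    assert (Heps : 0 < eps) by auto.
    rewrite int1_log by lra. fold p1.
    set (eta := eps / ga).
    assert (Heta : 0 < eta) by (unfold eta; apply Rdiv_lt_0_compat; lra).
    assert (HE1 : 1 <= E).
    { unfold E. rewrite <- (Rpower_O D) by lra. apply pw_expo; lra. }
    assert (Hag : 1 <= Rpower a ga) by (rewrite <- (Rpower_O a) by lra; apply pw_expo; lra).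
    assert (HAp0 : 0 < A * p1) by nra.
    assert (Hln : ln (A * p1 + E) - ln E <= ln (1 + A * p1)).
    { assert (ln (A * p1 + E) <= ln (E * (1 + A * p1))) by (apply ln_le; nra).
      rewrite ln_mult in H by lra. lra. }
    assert (Hln0 : 0 <= ln (A * p1 + E) - ln E).
    { assert (ln E <= ln (A * p1 + E)) by (apply ln_le; lra). lra. }
    assert (Hb : ln (1 + A * p1) <= Rpower (1 + A * p1) eta / eta) by (apply ln_bound; lra).
    assert (Hc : Rpower (1 + A * p1) eta <= Rpower (1 + Rpower 2 (ga - 4)) eta * Rpower a eps).
    { rewrite HAp.
      assert (1 + Rpower 2 (ga - 4) * Rpower a ga <= (1 + Rpower 2 (ga - 4)) * Rpower a ga).
      { pose proof (pw_pos 2 (ga - 4)). nra. }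
      eapply Rle_trans. apply pw_mono; [pose proof (pw_pos 2 (ga - 4)); pose proof (pw_pos a ga); nra | exact H | lra].
      rewrite <- Rpower_mult_distr by (try apply pw_pos; pose proof (pw_pos 2 (ga - 4)); lra).
      rewrite Rpower_mult. unfold eta. replace (ga * (eps / ga)) with eps by (field; lra). lra. }
    apply (Hsum (Kc ga eps)).
    { apply Rmult_le_pos; [|lra]. unfold Rdiv. apply Rmult_le_pos. lra. left; apply Rinv_0_lt_compat; lra. }
    2: auto.
    left.
    apply Rle_trans with ((Rpower (1 + Rpower 2 (ga - 4)) eta * Rpower a eps / eta) * (Rpower A (-1) * Rpower a (- be))).
    { rewrite pw_m1 by auto.
      replace ((ln (A * p1 + E) - ln E) / A * Rpower a (- be)) with ((ln (A * p1 + E) - ln E) * (/ A * Rpower a (- be))) by (field; lra).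
      apply Rmult_le_compat_r. apply Rmult_le_pos; [left; apply Rinv_0_lt_compat; lra | lra].
      eapply Rle_trans. apply Hln. eapply Rle_trans. apply Hb. unfold Rdiv. apply Rmult_le_compat_r.
      left; apply Rinv_0_lt_compat; lra. exact Hc. }
    unfold A. rewrite idC by lra. fold A.
    unfold T1. rewrite idT1 by lra.
    assert (HKc : 0 < Kc ga eps).
    { unfold Kc. apply Rmult_lt_0_compat. apply Rdiv_lt_0_compat. apply pw_pos. fold eta. lra. apply pw_pos. }
    rewrite Rabs_right by lra. unfold Kc. fold eta. right.
    rewrite Heq. replace (2 - (1 * ga + be) + eps) with (eps + (2 - ga - be)) by ring.
    rewrite Rpower_plus. field. lra.
  -
    assert (Heps : eps = 0) by (apply He0; lra).
    rewrite int1 by lra.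
    fold p1.
    assert (Hv : (Rpower (A * p1 + E) (1 - al) - Rpower E (1 - al)) / ((1 - al) * A)
                 <= Rpower E (1 - al) / ((al - 1) * A)).
    { pose proof (pw_pos (A * p1 + E) (1 - al)).
      replace ((Rpower (A * p1 + E) (1 - al) - Rpower E (1 - al)) / ((1 - al) * A))
        with ((Rpower E (1 - al) - Rpower (A * p1 + E) (1 - al)) / ((al - 1) * A)) by (field; split; lra).
      unfold Rdiv. apply Rmult_le_compat_r. left; apply Rinv_0_lt_compat; nra. lra. }
    apply (Hsum (Kb al ga)).
    { apply Rmult_le_pos; [|lra].
      replace ((Rpower (A * p1 + E) (1 - al) - Rpower E (1 - al)) / ((1 - al) * A))
        with ((Rpower E (1 - al) - Rpower (A * p1 + E) (1 - al)) / ((al - 1) * A)) by (field; split; lra).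
      unfold Rdiv. apply Rmult_le_pos.
      assert (Rpower (A * p1 + E) (1 - al) <= Rpower E (1 - al)) by (apply pw_anti; nra).
      lra. left; apply Rinv_0_lt_compat; nra. }
    2: auto.
    right. eapply Rle_trans. apply Rmult_le_compat_r. lra. exact Hv.
    replace (Rpower E (1 - al) / ((al - 1) * A) * Rpower a (- be))
      with (/ (al - 1) * (Rpower E (1 - al) * Rpower A (-1) * Rpower a (- be))).
    2: { rewrite pw_m1 by auto. field. split; lra. }
    unfold E, A. rewrite idB by lra.
    unfold T2. rewrite Heps, Rplus_0_r.
    assert (HKb : 0 < Kb al ga) by (unfold Kb; apply Rdiv_lt_0_compat; [apply pw_pos | lra]).
    rewrite Rabs_right by lra. unfold Kb. right. field. lra.
Qed.

Theorem lemma4p1 :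
  forall alpha beta gamma : R,
    1 < gamma -> gamma < 2 -> 0 <= alpha -> 0 <= beta ->
    beta + alpha * gamma > 2 ->
  forall eps : R,
    (alpha <> 1 -> eps = 0) -> (alpha = 1 -> 0 < eps) ->
  exists C : R, 0 < C /\
    forall (t0 : R) (x0 : vec3) (rt : R),
      0 <= t0 -> norm3 x0 >= t0 + 2 -> 0 <= rt -> rt <= t0 ->
      let r0 := norm3 x0 in
      sphere_integral (integrand alpha beta gamma t0 rt x0)
      <= C * Rpower (r0 - rt) (2 - beta - gamma + eps) * Rpower r0 (-2)
           * (Rpower (r0 - rt) ((1 - alpha) * gamma)
              + Rpower (r0 - t0) ((1 - alpha) * gamma)).
Proof.
  intros al be ga Hg1 Hg2 Hal Hbe Hk eps He0 He1.
  assert (HK : 0 <= Kall al be ga eps).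
  { unfold Kall. pose proof (Rabs_pos (Ka al ga)). pose proof (Rabs_pos (Kb al ga)).
    pose proof (Rabs_pos (Kc ga eps)). pose proof (Rabs_pos (K2 al be ga)). lra. }
  assert (HPI := PI_RGT_0).
  exists (2 * PI * (Kall al be ga eps + 1)). split. nra.
  intros t0 x0 rt Ht0 Hx0 Hrt0 Hrt r0.
  assert (Heps : 0 <= eps).
  { destruct (Req_dec al 1) as [E|E]. left; auto. right; symmetry; auto. }
  unfold r0. rewrite sphere_eq by lra.
  set (R0 := norm3 x0) in *.
  assert (Hg : 1 < ga < 2) by lra.
  pose proof (split_bound al be ga t0 rt R0 Hg Hal Hbe ltac:(lra) ltac:(lra)) as S1. cbv zeta in S1.
  pose proof (part1 al be ga eps t0 rt R0 Hg Hal Hbe Hk He0 He1 ltac:(lra) ltac:(lra)) as S2.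
  pose proof (part2 al be ga eps t0 rt R0 Hg Hal Hbe Hk Heps ltac:(lra) ltac:(lra)) as S3.
  set (X := Rpower (R0 - rt) (2 - be - ga + eps)) in *.
  set (Y := Rpower R0 (-2)) in *.
  set (Z1 := Rpower (R0 - rt) ((1 - al) * ga)) in *.
  set (Z2 := Rpower (R0 - t0) ((1 - al) * ga)) in *.
  assert (HX : 0 < X) by apply pw_pos. assert (HY : 0 < Y) by apply pw_pos.
  assert (HZ1 : 0 < Z1) by apply pw_pos. assert (HZ2 : 0 < Z2) by apply pw_pos.
  assert (HT : RInt (gfun al be ga t0 rt R0) (-1) 1 <= Kall al be ga eps * (X * Y * Z1 + X * Y * Z2)).
  { eapply Rle_trans. exact S1.
    unfold Kall.
    assert (Rabs (K2 al be ga) * (X * Y * Z1) <= Rabs (K2 al be ga) * (X * Y * Z1 + X * Y * Z2)).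
    { apply Rmult_le_compat_l. apply Rabs_pos. assert (0 < X * Y * Z2) by (repeat apply Rmult_lt_0_compat; auto). lra. }
    lra. }
  assert (HP : 0 < X * Y * Z1 + X * Y * Z2) by (assert (0 < X * Y * Z1) by (repeat apply Rmult_lt_0_compat; auto);
    assert (0 < X * Y * Z2) by (repeat apply Rmult_lt_0_compat; auto); lra).
  replace (2 * PI * (Kall al be ga eps + 1) * X * Y * (Z1 + Z2))
    with (2 * PI * ((Kall al be ga eps + 1) * (X * Y * Z1 + X * Y * Z2))) by ring.
  apply Rmult_le_compat_l. lra. nra.
Qed.
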